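(* Let $x\in J$ with $\|x\|_J=1$. (1) If $x$ is an extreme point of $B_J$, then $\|x|_I\|_J=\|x|_I\|_2$ for every interval $I$ of $\mathbb N$. (2) If $\{I_i\}_{i\in F}$ is an $x$-norming family and $b_i=\sum_{n\in I_i}x(n)$ for $i\in F$, then $\sum_{i\in F}b_ie_{k_i}$ is an extreme point of $B_J$ for every strictly increasing sequence $(k_i)_{i\in F}$ in $\mathbb N$.
   Context: For a real sequence $x=(x(n))_{n\in\mathbb N}$ let $\|x\|_J=\sup\bigl(\sum_{i=1}^n|\sum_{k\in I_i}x(k)|^2\bigr)^{1/2}$ over all $n$ and all families of pairwise disjoint intervals $I_1,\dots,I_n$ of $\mathbb N$ (intervals: nonempty sets of consecutive positive integers, possibly infinite). $J=\{x:\|x\|_J<\infty\}$ with unit vector basis $(e_n)$ and closed unit ball $B_J$; $\|\cdot\|_2$ is the $\ell_2$ norm; for $x\in J$ and any interval $I$ the series $\sum_{k\in I}x(k)$ converges. For $A\subset\mathbb N$, $x|_A$ equals $x$ on $A$ and $0$ off $A$. A family of intervals $\mathcal I=\{I_i\}_{i\in F}$: $F=\{1,\dots,k\}$ or $F=\mathbb N$, each $I_i$ an interval, $\max I_i<\min I_{i+1}$ whenever $i+1\in F$; it is $x$-norming if $(\sum_{i\in F}|\sum_{k\in I_i}x(k)|^2)^{1/2}=\|x\|_J$. *)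

(* Defs.v *)
From Stdlib Require Import Reals Lra List Arith.
From Coquelicot Require Import Coquelicot.
Open Scope R_scope.

(* Positive integers 1,2,3,... are re-indexed as 0,1,2,... (nat). *)

(* An interval of N: [a, b] (a <= b) when the second component is Some b,
   or the infinite interval [a, oo) when it is None. *)
Definition interval : Type := (nat * option nat)%type.

Definition valid_interval (I : interval) : Prop :=
  match snd I with Some b => (fst I <= b)%nat | None => True end.

Definition in_interval (I : interval) (n : nat) : bool :=
  (Nat.leb (fst I) n &&
   match snd I with Some b => Nat.leb n b | None => true end)%bool.

Definition disjoint_intervals (I J : interval) : Prop :=
  forall n, ~ (in_interval I n = true /\ in_interval J n = true).

Definition isum (x : nat -> R) (I : interval) : R :=
  match snd I with
  | Some b => sum_n_m x (fst I) b
  | None => Series (fun k => x (fst I + k)%nat)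
  end.

Definition sumsq (l : list R) : R := fold_right (fun r s => r ^ 2 + s) 0 l.

Definition Jvalues (x : nat -> R) (r : R) : Prop :=
  exists l : list interval,
    List.Forall valid_interval l /\ ForallOrdPairs disjoint_intervals l /\
    r = sqrt (sumsq (map (isum x) l)).

(* ||x||_J as an extended real (p_infty when x is not in J). *)
Definition Jnorm (x : nat -> R) : Rbar := Lub_Rbar (Jvalues x).

Definition inJ (x : nat -> R) : Prop := is_finite (Jnorm x).

Definition in_BJ (x : nat -> R) : Prop := Rbar_le (Jnorm x) (Finite 1).

Definition extreme_BJ (x : nat -> R) : Prop :=
  in_BJ x /\
  forall (u v : nat -> R) (t : R), in_BJ u -> in_BJ v -> 0 < t < 1 ->
    (forall n, x n = t * u n + (1 - t) * v n) -> u = v.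

Definition restrict (x : nat -> R) (I : interval) : nat -> R :=
  fun n => if in_interval I n then x n else 0.

Definition l2norm (x : nat -> R) : R := sqrt (Series (fun n => (x n) ^ 2)).

(* Index sets F: Some k means F = {0,...,k-1}; None means F = N. *)
Definition inF (F : option nat) (i : nat) : Prop :=
  match F with Some k => (i < k)%nat | None => True end.

Definition interval_family (F : option nat) (fam : nat -> interval) : Prop :=
  (forall i, inF F i -> valid_interval (fam i)) /\
  (forall i, inF F i -> inF F (S i) ->
     match snd (fam i) with
     | Some b => (b < fst (fam (S i)))%nat
     | None => False
     end).

Definition Fsumsq (F : option nat) (c : nat -> R) : R :=
  match F with
  | Some k => fold_right (fun i s => (c i) ^ 2 + s) 0 (seq 0 k)
  | None => Series (fun i => (c i) ^ 2)
  end.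

Definition norming_family (x : nat -> R) (F : option nat) (fam : nat -> interval) : Prop :=
  interval_family F fam /\
  Jnorm x = Finite (sqrt (Fsumsq F (fun i => isum x (fam i)))).

(* y = sum_{i in F} c_i e_{k_i} (coordinatewise) *)
Definition is_sum_basis (F : option nat) (c : nat -> R) (k : nat -> nat) (y : nat -> R) : Prop :=
  (forall i, inF F i -> y (k i) = c i) /\
  (forall n, (forall i, inF F i -> k i <> n) -> y n = 0).

(* Main.v *)
Require Import Defs.
From Stdlib Require Import Reals Lra Lia Psatz List Arith Permutation Classical FunctionalExtensionality.
From Coquelicot Require Import Coquelicot.
Open Scope R_scope.

Definition lsum {A} (f : A -> R) (l : list A) : R := fold_right (fun a s => f a + s) 0 l.

Lemma lsum_app {A} (f : A -> R) l1 l2 : lsum f (l1 ++ l2) = lsum f l1 + lsum f l2.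
Proof. induction l1; simpl; [lra|]. rewrite IHl1; lra. Qed.

Lemma lsum_ext {A} (f g : A -> R) l : (forall a, In a l -> f a = g a) -> lsum f l = lsum g l.
Proof. induction l; simpl; intros H; auto. rewrite H, IHl; auto. Qed.

Lemma lsum_le {A} (f g : A -> R) l : (forall a, In a l -> f a <= g a) -> lsum f l <= lsum g l.
Proof. induction l; simpl; intros H; [lra|]. pose proof (H a (or_introl eq_refl)).
  pose proof (IHl (fun b hb => H b (or_intror hb))). lra. Qed.

Lemma lsum_nonneg {A} (f : A -> R) l : (forall a, In a l -> 0 <= f a) -> 0 <= lsum f l.
Proof. intros H. apply Rle_trans with (lsum (fun _ => 0) l).
  - clear H; induction l; simpl; lra.
  - apply lsum_le; auto. Qed.

Lemma lsum_perm {A} (f : A -> R) l l' : Permutation l l' -> lsum f l = lsum f l'.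
Proof. induction 1; simpl; try lra. Qed.

Lemma lsum_plus {A} (f g : A -> R) l : lsum (fun a => f a + g a) l = lsum f l + lsum g l.
Proof. induction l; simpl; lra. Qed.

Lemma lsum_filter {A} (f : A -> R) (P : A -> bool) l :
  lsum f l = lsum f (filter P l) + lsum f (filter (fun a => negb (P a)) l).
Proof. induction l; simpl; [lra|]. destruct (P a); simpl; lra. Qed.

Lemma sumsq_lsum {A} (g : A -> R) l : sumsq (map g l) = lsum (fun a => g a ^ 2) l.
Proof. induction l; simpl; auto. rewrite IHl; auto. Qed.

Lemma sumsq_nonneg l : 0 <= sumsq l.
Proof. induction l; simpl; nra. Qed.

Lemma FOP_map {A B} (R1 : A -> A -> Prop) (R2 : B -> B -> Prop) (f : A -> B) (P : A -> Prop) l :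
  List.Forall P l -> ForallOrdPairs R1 l ->
  (forall x y, P x -> P y -> R1 x y -> R2 (f x) (f y)) -> ForallOrdPairs R2 (map f l).
Proof.
  intros HP H Hf. induction H; simpl; constructor.
  - inversion HP; subst. rewrite Forall_forall in *. intros b Hb.
    apply in_map_iff in Hb. destruct Hb as [c [<- Hc]]. apply Hf; auto.
  - inversion HP; auto.
Qed.

Lemma FOP_app {A} (R1 : A -> A -> Prop) l1 l2 :
  ForallOrdPairs R1 l1 -> ForallOrdPairs R1 l2 -> (forall x y, In x l1 -> In y l2 -> R1 x y) ->
  ForallOrdPairs R1 (l1 ++ l2).
Proof.
  intros H1 H2 H. induction H1; simpl; auto. constructor.
  - apply Forall_app; split; auto. rewrite Forall_forall; intros; apply H; simpl; auto.
  - apply IHForallOrdPairs. intros; apply H; simpl; auto.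
Qed.

Lemma FOP_app_inv {A} (R1 : A -> A -> Prop) l1 l2 :
  ForallOrdPairs R1 (l1 ++ l2) ->
  ForallOrdPairs R1 l1 /\ ForallOrdPairs R1 l2 /\ (forall x y, In x l1 -> In y l2 -> R1 x y).
Proof.
  induction l1; simpl; intros H.
  - split; [constructor|split; [exact H|intros; contradiction]].
  - inversion H; subst. destruct (IHl1 H3) as [? [? ?]]. repeat split; auto.
    + constructor; auto. apply Forall_app in H2; tauto.
    + intros x y [<-|Hx] Hy; auto. apply Forall_app in H2. destruct H2 as [_ H2].
      rewrite Forall_forall in H2; auto.
Qed.

Lemma FOP_perm {A} (R1 : A -> A -> Prop) (Hs : forall x y, R1 x y -> R1 y x) l l' :
  Permutation l l' -> ForallOrdPairs R1 l -> ForallOrdPairs R1 l'.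
Proof.
  induction 1; intros HF; auto.
  - inversion HF; subst. constructor; auto. eapply Permutation_Forall; eauto.
  - inversion HF; subst. inversion H1; subst. inversion H2; subst.
    constructor; [constructor; auto|constructor; auto].
Qed.

Lemma FOP_seq a n : ForallOrdPairs (fun i j => (i < j)%nat) (seq a n).
Proof.
  revert a; induction n; intros a; simpl; constructor; auto.
  rewrite Forall_forall; intros j Hj; apply in_seq in Hj; lia.
Qed.

Lemma FOP_filter {A} (R1 : A -> A -> Prop) P l : ForallOrdPairs R1 l -> ForallOrdPairs R1 (filter P l).
Proof.
  induction 1; simpl; [constructor|]. destruct (P a); auto. constructor; auto.
  rewrite Forall_forall in *. intros y Hy; apply filter_In in Hy; apply H; tauto.
Qed.

Lemma FOP_mono {A} (R1 R2 : A -> A -> Prop) (P : A -> Prop) l :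
  List.Forall P l -> ForallOrdPairs R1 l -> (forall x y, P x -> P y -> R1 x y -> R2 x y) -> ForallOrdPairs R2 l.
Proof. intros HP H Hr. rewrite <- (map_id l). eapply FOP_map; eauto. Qed.

Definition fvalid (I : nat * nat) : Prop := (fst I <= snd I)%nat.
Definition fdisj (I J : nat * nat) : Prop := (snd I < fst J)%nat \/ (snd J < fst I)%nat.
Definition ffam (l : list (nat * nat)) : Prop := List.Forall fvalid l /\ ForallOrdPairs fdisj l.
Definition fsum (z : nat -> R) (I : nat * nat) : R := sum_n_m z (fst I) (snd I).
Definition fval (z : nat -> R) (l : list (nat * nat)) : R := lsum (fun I => fsum z I ^ 2) l.
Definition FB (z : nat -> R) (M : R) : Prop := forall l, ffam l -> fval z l <= M.
Definition toI (I : nat * nat) : interval := (fst I, Some (snd I)).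

Lemma fdisj_sym I J : fdisj I J -> fdisj J I.
Proof. unfold fdisj; tauto. Qed.

Lemma fval_nonneg z l : 0 <= fval z l.
Proof. apply lsum_nonneg; intros; nra. Qed.

Lemma ffam_Jvalues z l : ffam l -> Jvalues z (sqrt (fval z l)).
Proof.
  intros [Hv Hd]. exists (map toI l). split; [|split].
  - rewrite Forall_forall in *. intros I HI. apply in_map_iff in HI.
    destruct HI as [J [<- HJ]]. apply Hv in HJ. exact HJ.
  - apply (FOP_map fdisj disjoint_intervals toI fvalid); auto. intros [a b] [c d] H1 H2 H3 n [Hn1 Hn2].
    unfold in_interval, fvalid, fdisj in *; simpl in *.
    apply andb_prop in Hn1, Hn2. destruct Hn1 as [Ha Hb]; destruct Hn2 as [Hc Hd'].
    apply Nat.leb_le in Ha, Hb, Hc, Hd'. lia.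
  - rewrite map_map, sumsq_lsum. reflexivity.
Qed.

Lemma Jvalues_le z r : Rbar_le (Jnorm z) (Finite r) -> forall v, Jvalues z v -> v <= r.
Proof.
  intros H v Hv. destruct (Lub_Rbar_correct (Jvalues z)) as [Hub _].
  pose proof (Hub v Hv). unfold Jnorm in H.
  pose proof (Rbar_le_trans (Finite v) _ (Finite r) H0 H). exact H1.
Qed.

Lemma sqrt_le_1_sq v r : 0 <= v -> 0 <= r -> sqrt v <= r -> v <= r ^ 2.
Proof. intros Hv Hr H. rewrite <- (sqrt_sqrt v Hv). simpl. rewrite Rmult_1_r.
  apply Rmult_le_compat; auto; apply sqrt_pos. Qed.

Lemma FB_of_Jnorm z r : 0 <= r -> Rbar_le (Jnorm z) (Finite r) -> FB z (r ^ 2).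
Proof.
  intros Hr H l Hl. apply sqrt_le_1_sq; auto. apply fval_nonneg.
  apply (Jvalues_le z r H). apply ffam_Jvalues; auto.
Qed.

Lemma gen_bound_of_Jnorm z r : 0 <= r -> Rbar_le (Jnorm z) (Finite r) ->
  forall l, List.Forall valid_interval l -> ForallOrdPairs disjoint_intervals l ->
  sumsq (map (isum z) l) <= r ^ 2.
Proof.
  intros Hr H l H1 H2. apply sqrt_le_1_sq; auto. apply sumsq_nonneg.
  apply (Jvalues_le z r H). exists l; auto.
Qed.

Lemma lsum_map {A B} (f : B -> R) (g : A -> B) l : lsum f (map g l) = lsum (fun a => f (g a)) l.
Proof. induction l; simpl; auto. rewrite IHl; auto. Qed.

Lemma sum_shift (z : nat -> R) a n m : sum_n_m z (a + n) (a + m) = sum_n_m (fun k => z (a + k)%nat) n m.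
Proof.
  revert n m; induction a; intros n m.
  - apply sum_n_m_ext; intros; reflexivity.
  - replace (S a + n)%nat with (a + S n)%nat by lia. replace (S a + m)%nat with (a + S m)%nat by lia.
    rewrite IHa. rewrite <- sum_n_m_S. apply sum_n_m_ext; intros k. f_equal; lia.
Qed.

Lemma sum_shift0 (z : nat -> R) a N : sum_n_m z a (a + N) = sum_n (fun k => z (a + k)%nat) N.
Proof. unfold sum_n. rewrite <- sum_shift. rewrite Nat.add_0_r. reflexivity. Qed.

Lemma Rabs_pow2' r : Rabs r ^ 2 = r ^ 2.
Proof. simpl. rewrite !Rmult_1_r. rewrite <- Rabs_mult. apply Rabs_right. nra. Qed.

Lemma FB_ex_series (z : nat -> R) M : FB z M -> forall a, ex_series (fun k => z (a + k)%nat).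
Proof.
  intros HB a. apply (@ex_series_Cauchy R_AbsRing R_CompleteNormedModule). intros eps. apply NNPP. intros Hn.
  assert (H : forall N, exists n m, (N <= n)%nat /\ (N <= m)%nat /\
             eps <= Rabs (sum_n_m (fun k => z (a + k)%nat) n m)).
  { intros N. apply NNPP; intros H1. apply Hn. exists N. intros n m Hn1 Hm1.
    apply Rnot_le_lt. intros H2. apply H1. exists n, m. auto. }
  assert (Hb : forall K N, exists l, ffam l /\ (forall I, In I l -> (N <= fst I)%nat) /\
                 INR K * (eps * eps) <= fval z l).
  { induction K; intros N.
    - exists nil. split; [split; constructor|]. split; [intros I []|]. simpl. unfold fval; simpl; lra.
    - destruct (H N) as [n [m [Hn1 [Hm1 He]]]].
      assert (Hnm : (n <= m)%nat).
      { destruct (le_lt_dec n m); auto. rewrite sum_n_m_zero in He; auto.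
        pose proof (cond_pos eps). unfold zero in He; simpl in He. rewrite Rabs_R0 in He. lra. }
      destruct (IHK (S (a + m))) as [l [[Hv Hd] [Hf Hval]]].
      exists ((a + n, a + m)%nat :: l). split; [split|split].
      + constructor; auto. unfold fvalid; simpl; lia.
      + constructor; auto. rewrite Forall_forall. intros J HJ. left. simpl. apply Hf in HJ. lia.
      + intros I [<-|HI]; simpl; [lia|]. apply Hf in HI; lia.
      + unfold fval in *.
        change (INR (S K) * (eps * eps) <= fsum z (a + n, a + m)%nat ^ 2 + lsum (fun I => fsum z I ^ 2) l).
        unfold fsum at 1. cbn [fst snd]. rewrite sum_shift. rewrite S_INR.
        assert (eps * eps <= (sum_n_m (fun k => z (a + k)%nat) n m) ^ 2).
        { pose proof (cond_pos eps). rewrite <- Rabs_pow2'. simpl. nra. }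
        lra. }
  destruct (INR_unbounded (M / (eps * eps))) as [K HK].
  destruct (Hb K 0%nat) as [l [Hl [_ Hv]]]. pose proof (HB l Hl).
  pose proof (cond_pos eps).
  assert (M < INR K * (eps * eps)).
  { apply Rmult_lt_reg_r with (/ (eps * eps)). apply Rinv_0_lt_compat; nra.
    rewrite Rmult_assoc, Rinv_r by nra. rewrite Rmult_1_r. exact HK. }
  lra.
Qed.


Definition trunc (N : nat) (I : interval) : nat * nat :=
  (fst I, match snd I with Some b => b | None => (fst I + N)%nat end).

Lemma ex_series_lim (w : nat -> R) : ex_series w -> is_lim_seq (sum_n w) (Series w).
Proof. intros [l Hl]. rewrite (is_series_unique _ _ Hl). exact Hl. Qed.

Lemma lim_sumsq {A} (g : nat -> A -> R) (h : A -> R) l :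
  (forall a, In a l -> is_lim_seq (fun N => g N a) (h a)) ->
  is_lim_seq (fun N => lsum (fun a => g N a ^ 2) l) (lsum (fun a => h a ^ 2) l).
Proof.
  induction l; simpl; intros H.
  - apply is_lim_seq_const.
  - apply is_lim_seq_plus'; auto. simpl.
    apply is_lim_seq_mult'; auto. apply is_lim_seq_mult'; auto. apply is_lim_seq_const.
Qed.

Lemma FB_gen z M : FB z M -> forall l, List.Forall valid_interval l -> ForallOrdPairs disjoint_intervals l ->
  sumsq (map (isum z) l) <= M.
Proof.
  intros HB l Hv Hd.
  assert (Hl : forall N, ffam (map (trunc N) l)).
  { intros N; split.
    - rewrite Forall_forall in *. intros J HJ. apply in_map_iff in HJ. destruct HJ as [I [<- HI]].
      apply Hv in HI. unfold fvalid, trunc, valid_interval in *. destruct I as [a [b|]]; simpl in *; lia.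
    - apply (FOP_map disjoint_intervals fdisj (trunc N) valid_interval); auto.
      intros [a b'] [c d'] H1 H2 H3. unfold fdisj, trunc, disjoint_intervals, valid_interval in *; simpl in *.
      apply NNPP; intros H4. apply (H3 (Nat.max a c)). unfold in_interval; simpl.
      destruct b' as [b|]; destruct d' as [d|]; simpl in *.
      all: split; apply andb_true_intro; split; try reflexivity; apply Nat.leb_le; lia. }
  assert (Hlim : is_lim_seq (fun N => fval z (map (trunc N) l)) (sumsq (map (isum z) l))).
  { rewrite sumsq_lsum. unfold fval.
    eapply is_lim_seq_ext. { intros N. symmetry. apply (lsum_map (fun I => fsum z I ^ 2) (trunc N)). }
    apply lim_sumsq. intros [a [b|]] _; unfold trunc, fsum, isum; simpl.
    - apply is_lim_seq_const.
    - eapply is_lim_seq_ext. { intros N. symmetry. apply sum_shift0. }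
      apply ex_series_lim. eapply FB_ex_series; eauto. }
  assert (Hle := is_lim_seq_le _ _ _ _ (fun N => HB _ (Hl N)) Hlim (is_lim_seq_const M)).
  exact Hle.
Qed.

Lemma sum_plusR (u v : nat -> R) n m : sum_n_m (fun k => u k + v k) n m = sum_n_m u n m + sum_n_m v n m.
Proof. exact (sum_n_m_plus u v n m). Qed.

Lemma sum_zeroR n m : sum_n_m (fun _ => 0) n m = 0.
Proof. exact (@sum_n_m_const_zero R_AbelianMonoid n m). Qed.

Lemma sum_SmR (u : nat -> R) n m : (n <= S m)%nat -> sum_n_m u n (S m) = sum_n_m u n m + u (S m).
Proof. intros; exact (sum_n_Sm u n m H). Qed.

Lemma sum_emptyR (u : nat -> R) n m : (m < n)%nat -> sum_n_m u n m = 0.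
Proof. intros; exact (sum_n_m_zero u n m H). Qed.

Lemma sum_ChaslesR (u : nat -> R) n m k : (n <= S m)%nat -> (m <= k)%nat ->
  sum_n_m u n k = sum_n_m u n m + sum_n_m u (S m) k.
Proof. intros; exact (sum_n_m_Chasles u n m k H H0). Qed.

Lemma sum_nonneg (u : nat -> R) n m : (forall k, 0 <= u k) -> 0 <= sum_n_m u n m.
Proof. intros H. rewrite <- (sum_zeroR n m). apply sum_n_m_le; auto. Qed.

Lemma sum_multR c (u : nat -> R) n m : sum_n_m (fun k => c * u k) n m = c * sum_n_m u n m.
Proof. exact (sum_n_m_mult_l c u n m). Qed.

Lemma sum_oppR (u : nat -> R) n m : sum_n_m (fun k => - u k) n m = - sum_n_m u n m.
Proof. rewrite <- (Rmult_1_l (sum_n_m u n m)), Ropp_mult_distr_l, <- sum_multR.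
  apply sum_n_m_ext; intros; lra.
Qed.

Definition inI (I : nat * nat) (n : nat) : bool := ((fst I <=? n) && (n <=? snd I))%bool.

Lemma inI_iff I n : inI I n = true <-> (fst I <= n <= snd I)%nat.
Proof. unfold inI. rewrite Bool.andb_true_iff, !Nat.leb_le. tauto. Qed.

Lemma inI_false I n : inI I n = false <-> ~ (fst I <= n <= snd I)%nat.
Proof. rewrite <- inI_iff. destruct (inI I n); split; intros; try congruence; tauto. Qed.

Lemma sum_restr (w : nat -> R) lo d a b :
  sum_n_m (fun n => if inI (a, b) n then w n else 0) lo (lo + d) =
  if (Nat.max lo a <=? Nat.min (lo + d) b) then sum_n_m w (Nat.max lo a) (Nat.min (lo + d) b) else 0.
Proof.
  induction d.
  - rewrite Nat.add_0_r, sum_n_n. destruct (inI (a, b) lo) eqn:E.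
    + apply inI_iff in E; simpl in E. replace (Nat.max lo a) with lo by lia.
      replace (Nat.min lo b) with lo by lia. rewrite Nat.leb_refl, sum_n_n. reflexivity.
    + apply inI_false in E; simpl in E. destruct (Nat.max lo a <=? Nat.min lo b) eqn:E2; auto.
      apply Nat.leb_le in E2. lia.
  - rewrite Nat.add_succ_r, sum_SmR by lia. rewrite IHd.
    remember (lo + d)%nat as h eqn:Hh.
    destruct (inI (a, b) (S h)) eqn:E.
    + apply inI_iff in E; simpl in E.
      replace (Nat.min (S h) b) with (S h) by lia.
      rewrite (proj2 (Nat.leb_le (Nat.max lo a) (S h))) by lia.
      destruct (Nat.max lo a <=? Nat.min h b) eqn:E2.
      * apply Nat.leb_le in E2. replace (Nat.min h b) with h in * by lia.
        rewrite sum_SmR by lia. reflexivity.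
      * apply Nat.leb_gt in E2. replace (Nat.max lo a) with (S h) by lia. rewrite sum_n_n. lra.
    + apply inI_false in E; simpl in E. rewrite Rplus_0_r.
      destruct (le_lt_dec a (S h)) as [Ha|Ha].
      * (* S h > b *)
        replace (Nat.min (S h) b) with (Nat.min h b) by lia. reflexivity.
      * rewrite (proj2 (Nat.leb_gt _ _)) by lia. rewrite (proj2 (Nat.leb_gt _ _)) by lia. reflexivity.
Qed.

Lemma sum_restr' (w : nat -> R) lo hi a b : (lo <= a)%nat -> (a <= b)%nat -> (b <= hi)%nat ->
  sum_n_m (fun n => if inI (a, b) n then w n else 0) lo hi = sum_n_m w a b.
Proof.
  intros H1 H2 H3. replace hi with (lo + (hi - lo))%nat by lia. rewrite sum_restr.
  replace (Nat.max lo a) with a by lia. replace (Nat.min (lo + (hi - lo)) b) with b by lia.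
  rewrite (proj2 (Nat.leb_le _ _)) by lia. reflexivity.
Qed.

Lemma lsum_sum_swap {A} (f : A -> nat -> R) l lo hi :
  lsum (fun I => sum_n_m (f I) lo hi) l = sum_n_m (fun n => lsum (fun I => f I n) l) lo hi.
Proof.
  induction l; simpl.
  - symmetry; apply sum_zeroR.
  - rewrite IHl. symmetry. apply sum_plusR.
Qed.

Lemma lsum_zero {A} (f : A -> R) l : (forall a, In a l -> f a = 0) -> lsum f l = 0.
Proof. induction l; simpl; intros H; auto. rewrite H, IHl; auto. lra. Qed.

Lemma count_pt (w : R) n l : 0 <= w -> ForallOrdPairs fdisj l ->
  lsum (fun I => if inI I n then w else 0) l <= w.
Proof.
  intros Hw H. induction H; simpl; [lra|].
  destruct (inI a n) eqn:E.
  - rewrite lsum_zero; [lra|]. intros J HJ. rewrite Forall_forall in H.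
    specialize (H J HJ). destruct (inI J n) eqn:E2; auto.
    apply inI_iff in E, E2. unfold fdisj in H. lia.
  - lra.
Qed.

Lemma count_le (w : nat -> R) lo hi l : (forall n, 0 <= w n) -> ffam l ->
  (forall I, In I l -> (lo <= fst I)%nat /\ (snd I <= hi)%nat) ->
  lsum (fun I => sum_n_m w (fst I) (snd I)) l <= sum_n_m w lo hi.
Proof.
  intros Hw [Hv Hd] Hin.
  rewrite (lsum_ext _ (fun I => sum_n_m (fun n => if inI I n then w n else 0) lo hi)).
  - rewrite lsum_sum_swap. apply sum_n_m_le. intros n. apply count_pt; auto.
  - intros [a b] HI. symmetry. rewrite Forall_forall in Hv. specialize (Hv _ HI). specialize (Hin _ HI).
    unfold fvalid in *; simpl in *. apply sum_restr'; lia.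
Qed.

Definition NV (z : nat -> R) : Prop :=
  forall a b, (a <= b)%nat -> (sum_n_m z a b) ^ 2 <= sum_n_m (fun n => z n ^ 2) a b.

Fixpoint maxsnd (l : list (nat * nat)) : nat :=
  match l with nil => 0%nat | J :: l' => Nat.max (snd J) (maxsnd l') end.

Lemma maxsnd_spec l I : In I l -> (snd I <= maxsnd l)%nat.
Proof. induction l; simpl; intros H; [contradiction|]. destruct H as [<-|H]; [lia|]. apply IHl in H; lia. Qed.

Lemma NV_fval z l N : NV z -> ffam l -> (forall I, In I l -> (snd I <= N)%nat) ->
  fval z l <= sum_n_m (fun n => z n ^ 2) 0 N.
Proof.
  intros HN Hl HI. eapply Rle_trans; [|apply (count_le _ 0 N l); auto].
  - unfold fval. apply lsum_le. intros [a b] Hab. destruct Hl as [Hv _].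
    rewrite Forall_forall in Hv. apply HN. apply (Hv _ Hab).
  - intros; nra.
  - intros I HI'; split; [lia|auto].
Qed.

Lemma sum_n_mono (a : nat -> R) N k : (forall n, 0 <= a n) -> sum_n a N <= sum_n a (N + k).
Proof.
  intros H. induction k. rewrite Nat.add_0_r; lra.
  rewrite Nat.add_succ_r. rewrite sum_Sn. pose proof (H (S (N + k))). change (plus (sum_n a (N + k)) (a (S (N + k)))) with (sum_n a (N + k) + a (S (N + k))). lra.
Qed.

Lemma partial_le_series (a : nat -> R) N : (forall n, 0 <= a n) -> ex_series a -> sum_n a N <= Series a.
Proof.
  intros H He. pose proof (ex_series_lim a He) as Hl.
  apply (is_lim_seq_incr_n _ N) in Hl.
  assert (Hm : forall n, sum_n a N <= sum_n a (n + N)).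
  { intros n. rewrite Nat.add_comm. apply sum_n_mono; auto. }
  exact (is_lim_seq_le (fun _ => sum_n a N) _ _ _ Hm (is_lim_seq_const _) Hl).
Qed.

Lemma NV_FB_series z : NV z -> ex_series (fun n => z n ^ 2) -> FB z (Series (fun n => z n ^ 2)).
Proof.
  intros HN He l Hl. eapply Rle_trans.
  - apply (NV_fval z l (maxsnd l)); auto. apply maxsnd_spec.
  - apply partial_le_series; auto. intros; nra.
Qed.

Lemma lsum_seq (f : nat -> R) a n : lsum f (seq a (S n)) = sum_n_m f a (a + n).
Proof.
  induction n.
  - simpl. rewrite Nat.add_0_r, sum_n_n. lra.
  - rewrite seq_S, lsum_app, IHn. simpl. rewrite Nat.add_succ_r, sum_SmR by lia. lra.
Qed.

Lemma singletons_ffam N : ffam (map (fun n => (n, n)) (seq 0 (S N))).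
Proof.
  split.
  - rewrite Forall_forall. intros I HI. apply in_map_iff in HI. destruct HI as [n [<- _]]. unfold fvalid; simpl; lia.
  - apply (FOP_map (fun i j => (i < j)%nat) fdisj (fun n => (n, n)) (fun _ => True)).
    + rewrite Forall_forall; auto.
    + apply FOP_seq.
    + intros i j _ _ H. left. simpl. lia.
Qed.

Lemma singletons_fval z N : fval z (map (fun n => (n, n)) (seq 0 (S N))) = sum_n_m (fun n => z n ^ 2) 0 N.
Proof.
  unfold fval. rewrite lsum_map. unfold fsum; cbn [fst snd].
  rewrite (lsum_ext _ (fun n => z n ^ 2)). apply lsum_seq.
  intros; rewrite sum_n_n; reflexivity.
Qed.

Lemma Jnorm_NV z : NV z -> ex_series (fun n => z n ^ 2) ->
  Jnorm z = Finite (sqrt (Series (fun n => z n ^ 2))).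
Proof.
  intros HN He. unfold Jnorm. apply is_lub_Rbar_unique. split.
  - intros v [l [Hv [Hd ->]]]. simpl. apply sqrt_le_1_alt.
    apply (FB_gen z); auto. apply NV_FB_series; auto.
  - intros b Hb.
    assert (Hs : forall N, Rbar_le (Finite (sqrt (sum_n_m (fun n => z n ^ 2) 0 N))) b).
    { intros N. apply Hb. rewrite <- singletons_fval. apply ffam_Jvalues. apply singletons_ffam. }
    destruct b as [r| |]; simpl; auto.
    + assert (Hr : 0 <= r). { assert (H : sqrt (sum_n_m (fun n => z n ^ 2) 0 0) <= r) by exact (Hs 0%nat). pose proof (sqrt_pos (sum_n_m (fun n => z n ^ 2) 0 0)). lra. }
      assert (Hp : forall N, sum_n (fun n => z n ^ 2) N <= r ^ 2).
      { intros N. assert (Hs' : sqrt (sum_n_m (fun n => z n ^ 2) 0 N) <= r) by exact (Hs N).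
        apply sqrt_le_1_sq; auto.
        apply sum_nonneg; intros; nra. }
      assert (Hc := is_lim_seq_le _ (fun _ => r ^ 2) _ _ Hp (ex_series_lim _ He) (is_lim_seq_const _)).
      simpl in Hc. rewrite <- (sqrt_pow2 r Hr). apply sqrt_le_1_alt. exact Hc.
    + apply (Hs 0%nat).
Qed.

Lemma algA a b g r S Q M : b*(S-b) >= 0 -> r*(S-r) >= 0 -> b^2+r^2+M <= Q -> Q < S^2 ->
  a*S <= 0 -> g*S <= 0 -> (a+b)^2 + (g+r)^2 + M + (S^2-Q) <= a^2 + (0+S+0)^2 + g^2.
Proof. intros. assert (a*b <= 0). { destruct (Rle_dec 0 S). nra. nra. } assert (g*r <= 0) by nra. nra. Qed.
Lemma algB a b g r S Q M : b*(S-b) >= 0 -> r*(S-r) >= 0 -> b^2+r^2+M <= Q -> Q < S^2 ->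
  a*S > 0 -> g*S <= 0 -> (a+b)^2 + (g+r)^2 + M + (S^2-Q) <= 0 + (a+S+0)^2 + g^2.
Proof. intros. assert (a*(S-b) >= 0) by nra. assert (g*r <= 0) by nra. nra. Qed.
Lemma algC a b g r S Q M : b*(S-b) >= 0 -> r*(S-r) >= 0 -> b^2+r^2+M <= Q -> Q < S^2 ->
  a*S <= 0 -> g*S > 0 -> (a+b)^2 + (g+r)^2 + M + (S^2-Q) <= a^2 + (0+S+g)^2 + 0.
Proof. intros. assert (g*(S-r) >= 0) by nra. assert (a*b <= 0) by nra. nra. Qed.
Lemma algD a b g r S Q M : b*(S-b) >= 0 -> r*(S-r) >= 0 -> b^2+r^2+M <= Q -> Q < S^2 ->
  a*S > 0 -> g*S > 0 -> (a+b)^2 + (g+r)^2 + M + (S^2-Q) <= 0 + (a+S+g)^2 + 0.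
Proof. intros. assert (g*(S-r) >= 0) by nra. assert (a*(S-b) >= 0) by nra. assert (a*g>0) by nra. nra. Qed.

Lemma alg_all (eL eR : bool) a b g r S Q M : b*(S-b) >= 0 -> r*(S-r) >= 0 -> b^2+r^2+M <= Q -> Q < S^2 ->
  (if eL then a*S > 0 else a*S <= 0) -> (if eR then g*S > 0 else g*S <= 0) ->
  (a+b)^2 + (g+r)^2 + M + (S^2-Q) <=
  (if eL then 0 else a^2) + ((if eL then a else 0) + S + (if eR then g else 0))^2 + (if eR then 0 else g^2).
Proof.
  intros; destruct eL, eR.
  - apply algD; auto. - apply algB; auto. - apply algC; auto. - apply algA; auto.
Qed.

Definition optl {A} (o : option A) : list A := match o with Some a => a :: nil | None => nil end.

Lemma perm_filter {A} (f : A -> bool) l : Permutation l (filter f l ++ filter (fun a => negb (f a)) l).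
Proof.
  induction l; simpl; auto. destruct (f a); simpl.
  - constructor; auto.
  - eapply Permutation_trans; [apply perm_skip; exact IHl|]. apply Permutation_middle.
Qed.

Lemma extract {A} (P : A -> Prop) l : (exists a, In a l /\ P a) -> exists a rest, P a /\ Permutation l (a :: rest).
Proof.
  intros [a [Ha HP]]. apply in_split in Ha. destruct Ha as [l1 [l2 ->]].
  exists a, (l1 ++ l2). split; auto. symmetry. apply Permutation_middle.
Qed.

Lemma ffam_perm l l' : Permutation l l' -> ffam l -> ffam l'.
Proof.
  intros Hp [Hv Hd]. split.
  - eapply Permutation_Forall; eauto.
  - eapply FOP_perm; eauto. apply fdisj_sym.
Qed.

Definition sub (I' I : nat * nat) : Prop := (fst I <= fst I')%nat /\ (snd I' <= snd I)%nat.

Lemma Forall_sub a a' l' l : Forall2 sub l' l -> List.Forall (fdisj a) l -> sub a' a -> List.Forall (fdisj a') l'.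
Proof.
  induction 1; intros HF Ha; constructor.
  - inversion HF; subst. unfold fdisj, sub in *. lia.
  - inversion HF; subst; auto.
Qed.

Lemma FOP_sub l' l : Forall2 sub l' l -> ForallOrdPairs fdisj l -> ForallOrdPairs fdisj l'.
Proof.
  induction 1; intros H1; constructor.
  - inversion H1; subst. eapply Forall_sub; eauto.
  - inversion H1; subst; auto.
Qed.

Lemma Forall2_refl_sub {A} (R1 : A -> A -> Prop) l : (forall a, R1 a a) -> Forall2 R1 l l.
Proof. induction l; constructor; auto. Qed.

Lemma ffam_app_inv l1 l2 : ffam (l1 ++ l2) -> ffam l1 /\ ffam l2 /\ (forall I J, In I l1 -> In J l2 -> fdisj I J).
Proof.
  intros [Hv Hd]. apply Forall_app in Hv. apply FOP_app_inv in Hd. unfold ffam; tauto.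
Qed.

Lemma ffam_app l1 l2 : ffam l1 -> ffam l2 -> (forall I J, In I l1 -> In J l2 -> fdisj I J) -> ffam (l1 ++ l2).
Proof.
  intros [H1 H2] [H3 H4] H. split. apply Forall_app; auto. apply FOP_app; auto.
Qed.

Lemma fval_app z l1 l2 : fval z (l1 ++ l2) = fval z l1 + fval z l2.
Proof. unfold fval; apply lsum_app. Qed.

Lemma fval_perm z l l' : Permutation l l' -> fval z l = fval z l'.
Proof. unfold fval; apply lsum_perm. Qed.

Definition lo (oL : option (nat * nat)) p := match oL with Some L => fst L | None => p end.
Definition hi (oR : option (nat * nat)) q := match oR with Some R => snd R | None => q end.

Lemma decomp p q l : ffam l -> (forall I, In I l -> ~ ((fst I <= p)%nat /\ (q <= snd I)%nat)) ->
  exists oL oR inn out,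
    Permutation l (optl oL ++ optl oR ++ inn ++ out) /\
    (forall L, oL = Some L -> (fst L < p)%nat /\ (p <= snd L)%nat /\ (snd L < q)%nat) /\
    (forall R, oR = Some R -> (p < fst R)%nat /\ (fst R <= q)%nat /\ (q < snd R)%nat) /\
    (forall J, In J inn -> (p <= fst J)%nat /\ (snd J <= q)%nat /\ ((p < fst J)%nat \/ (snd J < q)%nat)) /\
    (forall J, In J out -> (snd J < lo oL p)%nat \/ (hi oR q < fst J)%nat).
Proof.
  intros Hl Hnc.
  set (PL := fun J : nat * nat => (fst J < p)%nat /\ (p <= snd J)%nat).
  set (PR := fun J : nat * nat => (fst J <= q)%nat /\ (q < snd J)%nat).
  assert (HL : exists oL rest, Permutation l (optl oL ++ rest) /\
             (forall L, oL = Some L -> PL L) /\ (forall J, In J rest -> ~ PL J)).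
  { destruct (classic (exists a, In a l /\ PL a)) as [He|Hne].
    - destruct (extract PL l He) as [L [rest [HPL Hp]]]. exists (Some L), rest. split; [exact Hp|split].
      + intros L' HL'; inversion HL'; subst; auto.
      + intros J HJ HPJ. pose proof (ffam_perm _ _ Hp Hl) as [_ Hd]. inversion Hd; subst.
        rewrite Forall_forall in H1. specialize (H1 J HJ). unfold fdisj, PL in *. lia.
    - exists None, l. split; [apply Permutation_refl|split]; [intros; discriminate|].
      intros J HJ HPJ. apply Hne. exists J; auto. }
  destruct HL as [oL [rest [Hp1 [HoL HnL]]]].
  assert (Hl1 : ffam (optl oL ++ rest)) by (eapply ffam_perm; eauto).
  assert (HR : exists oR rest', Permutation rest (optl oR ++ rest') /\
             (forall R, oR = Some R -> PR R) /\ (forall J, In J rest' -> ~ PR J)).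
  { destruct (classic (exists a, In a rest /\ PR a)) as [He|Hne].
    - destruct (extract PR rest He) as [R [rest' [HPR Hp]]]. exists (Some R), rest'. split; [exact Hp|split].
      + intros R' HR'; inversion HR'; subst; auto.
      + intros J HJ HPJ. apply ffam_app_inv in Hl1. destruct Hl1 as [_ [Hr _]].
        pose proof (ffam_perm _ _ Hp Hr) as [_ Hd]. inversion Hd; subst.
        rewrite Forall_forall in H1. specialize (H1 J HJ). unfold fdisj, PR in *. lia.
    - exists None, rest. split; [apply Permutation_refl|split]; [intros; discriminate|].
      intros J HJ HPJ. apply Hne. exists J; auto. }
  destruct HR as [oR [rest' [Hp2 [HoR HnR]]]].
  set (insb := fun J : nat * nat => ((p <=? fst J) && (snd J <=? q))%bool).
  exists oL, oR, (filter insb rest'), (filter (fun J => negb (insb J)) rest').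
  assert (Hperm : Permutation l (optl oL ++ optl oR ++ filter insb rest' ++ filter (fun J => negb (insb J)) rest')).
  { eapply Permutation_trans; [exact Hp1|]. apply Permutation_app_head.
    eapply Permutation_trans; [exact Hp2|]. apply Permutation_app_head. apply perm_filter. }
  assert (Hin : forall J, In J l -> In J (optl oL ++ optl oR ++ rest') ).
  { intros J HJ. apply (Permutation_in _ Hp1) in HJ. apply in_app_or in HJ. apply in_or_app.
    destruct HJ as [HJ|HJ]; auto. right. apply (Permutation_in _ Hp2) in HJ. exact HJ. }
  assert (Hbig : ffam (optl oL ++ optl oR ++ filter insb rest' ++ filter (fun J => negb (insb J)) rest'))
    by (eapply ffam_perm; eauto).
  assert (HLin : forall L, oL = Some L -> In L l).
  { intros L ->. apply (Permutation_in _ (Permutation_sym Hp1)). simpl; auto. }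
  assert (HRin : forall R, oR = Some R -> In R l).
  { intros R ->. apply (Permutation_in _ (Permutation_sym Hp1)). apply in_or_app; right.
    apply (Permutation_in _ (Permutation_sym Hp2)). simpl; auto. }
  assert (Hrest : forall J, In J rest' -> In J l).
  { intros J HJ. apply (Permutation_in _ (Permutation_sym Hp1)). apply in_or_app; right.
    apply (Permutation_in _ (Permutation_sym Hp2)). apply in_or_app; auto. }
  assert (HnL' : forall J, In J rest' -> ~ PL J).
  { intros J HJ. apply HnL. apply (Permutation_in _ (Permutation_sym Hp2)). apply in_or_app; auto. }
  assert (Hvalid : forall J, In J l -> fvalid J).
  { destruct Hl as [Hv _]. rewrite Forall_forall in Hv. auto. }
  split; [exact Hperm|]. split; [|split; [|split]].
  - intros L HL. pose proof (HoL L HL). pose proof (Hnc L (HLin L HL)). unfold PL in *. lia.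
  - intros R HR. pose proof (HoR R HR). pose proof (Hnc R (HRin R HR)). unfold PR in *. lia.
  - intros J HJ. apply filter_In in HJ. destruct HJ as [HJ Hb]. unfold insb in Hb.
    apply andb_prop in Hb. destruct Hb as [Hb1 Hb2]. apply Nat.leb_le in Hb1, Hb2.
    pose proof (Hnc J (Hrest J HJ)). lia.
  - intros J HJ. apply filter_In in HJ. destruct HJ as [HJ Hb]. unfold insb in Hb.
    pose proof (HnL' J HJ) as H1. pose proof (HnR J HJ) as H2. pose proof (Hvalid J (Hrest J HJ)) as H3.
    unfold PL, PR, fvalid in *.
    assert (Hout : (snd J < p)%nat \/ (q < fst J)%nat).
    { destruct (Nat.leb p (fst J)) eqn:E1; destruct (Nat.leb (snd J) q) eqn:E2; simpl in Hb;
        try discriminate; apply Nat.leb_le in E1 || apply Nat.leb_gt in E1;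
        apply Nat.leb_le in E2 || apply Nat.leb_gt in E2; lia. }
    apply ffam_app_inv in Hbig. destruct Hbig as [_ [Hb2 HX]].
    apply ffam_app_inv in Hb2. destruct Hb2 as [_ [_ HY]].
    destruct Hout as [Ho|Ho].
    + left. destruct oL as [L|]; simpl; auto.
      assert (fdisj L J). { apply HX; simpl; auto. apply in_or_app. right. apply in_or_app. right.
        apply filter_In; split; auto. }
      pose proof (HoL L eq_refl). unfold fdisj in *. lia.
    + right. destruct oR as [R|]; simpl; auto.
      assert (fdisj R J). { apply HY; simpl; auto. apply in_or_app. right.
        apply filter_In; split; auto. }
      pose proof (HoR R eq_refl). unfold fdisj in *. lia.
Qed.

Lemma replace_lemma (x : nat -> R) lin out lnew lo0 hi0 eta : FB x 1 ->
  ffam (lin ++ out) -> (forall J, In J out -> (snd J < lo0)%nat \/ (hi0 < fst J)%nat) ->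
  ffam lnew -> (forall I, In I lnew -> (lo0 <= fst I)%nat /\ (snd I <= hi0)%nat) ->
  fval x lin + eta <= fval x lnew -> fval x (lin ++ out) + eta <= 1.
Proof.
  intros HB Hb Hout Hn Hbd Hv. apply ffam_app_inv in Hb. destruct Hb as [_ [Ho _]].
  assert (H : ffam (lnew ++ out)).
  { apply ffam_app; auto. intros I J HI HJ. apply Hbd in HI. apply Hout in HJ.
    destruct Hn as [Hnv _]. unfold fdisj. lia. }
  apply HB in H. rewrite fval_app in *. lra.
Qed.

Definition alpha (x : nat -> R) p (oL : option (nat * nat)) :=
  match oL with Some L => sum_n_m x (fst L) (pred p) | None => 0 end.
Definition beta (x : nat -> R) p (oL : option (nat * nat)) :=
  match oL with Some L => sum_n_m x p (snd L) | None => 0 end.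
Definition gamma (x : nat -> R) q (oR : option (nat * nat)) :=
  match oR with Some R => sum_n_m x (S q) (snd R) | None => 0 end.
Definition rho (x : nat -> R) q (oR : option (nat * nat)) :=
  match oR with Some R => sum_n_m x (fst R) q | None => 0 end.

Lemma chasL (x : nat -> R) a p m : (a < p)%nat -> (p <= S m)%nat -> sum_n_m x a m = sum_n_m x a (pred p) + sum_n_m x p m.
Proof.
  intros H1 H2. destruct (le_lt_dec p m).
  - rewrite (sum_ChaslesR x a (pred p) m) by lia. replace (S (pred p)) with p by lia. reflexivity.
  - replace m with (pred p) by lia. rewrite (sum_emptyR x p (pred p)) by lia. lra.
Qed.

Lemma chasR (x : nat -> R) a q e : (a <= S q)%nat -> (q <= e)%nat -> sum_n_m x a e = sum_n_m x a q + sum_n_m x (S q) e.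
Proof. intros; apply sum_ChaslesR; lia. Qed.

Definition leftpart p (oL : option (nat * nat)) := match oL with Some L => (fst L, pred p) :: nil | None => nil end.
Definition rightpart q (oR : option (nat * nat)) := match oR with Some R => (S q, snd R) :: nil | None => nil end.

Definition newfam p q oL oR (eL eR : bool) :=
  (if eL then nil else leftpart p oL) ++
  ((if eL then lo oL p else p), (if eR then hi oR q else q)) :: (if eR then nil else rightpart q oR).

Lemma newfam_ok (x : nat -> R) p q oL oR (eL eR : bool) : (p <= q)%nat ->
  (oL = None -> eL = false) -> (oR = None -> eR = false) ->
  (forall L, oL = Some L -> (fst L < p)%nat /\ (p <= snd L)%nat /\ (snd L < q)%nat) ->
  (forall R, oR = Some R -> (p < fst R)%nat /\ (fst R <= q)%nat /\ (q < snd R)%nat) ->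
  ffam (newfam p q oL oR eL eR) /\
  (forall I, In I (newfam p q oL oR eL eR) -> (lo oL p <= fst I)%nat /\ (snd I <= hi oR q)%nat) /\
  fval x (newfam p q oL oR eL eR) =
  (if eL then 0 else alpha x p oL ^ 2) +
  ((if eL then alpha x p oL else 0) + sum_n_m x p q + (if eR then gamma x q oR else 0)) ^ 2 +
  (if eR then 0 else gamma x q oR ^ 2).
Proof.
  intros Hpq HeL HeR HL HR.
  destruct oL as [L|]; [destruct (HL L eq_refl) as [HL1 [HL2 HL3]]|rewrite (HeL eq_refl)];
  (destruct oR as [R|]; [destruct (HR R eq_refl) as [HR1 [HR2 HR3]]|rewrite (HeR eq_refl)]);
  try destruct eL; try destruct eR;
  unfold newfam, leftpart, rightpart, lo, hi, alpha, gamma; cbn [app];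
  (split; [split; [repeat constructor; unfold fvalid; simpl; lia
                 |repeat constructor; unfold fdisj; simpl; lia]
          |split; [intros I HI; simpl in HI; repeat destruct HI as [<-|HI]; simpl; try lia; contradiction|]]);
  unfold fval, lsum, fold_right, fsum; cbn [fst snd].
  all: try rewrite (chasL x (fst L) p (snd R)) by lia.
  all: try rewrite (chasL x (fst L) p q) by lia.
  all: try rewrite (chasR x p q (snd R)) by lia.
  all: simpl; try lra.
Qed.

Definition minimal_viol (x : nat -> R) p q := forall a b, (p <= a)%nat -> (a <= b)%nat -> (b <= q)%nat ->
  ((p < a)%nat \/ (b < q)%nat) -> (sum_n_m x a b) ^ 2 <= sum_n_m (fun n => x n ^ 2) a b.

Lemma fval_lin (x : nat -> R) p q oL oR inn :
  (forall L, oL = Some L -> (fst L < p)%nat /\ (p <= snd L)%nat /\ (snd L < q)%nat) ->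
  (forall R, oR = Some R -> (p < fst R)%nat /\ (fst R <= q)%nat /\ (q < snd R)%nat) ->
  fval x (optl oL ++ optl oR ++ inn) =
  (alpha x p oL + beta x p oL) ^ 2 + (gamma x q oR + rho x q oR) ^ 2 + fval x inn.
Proof.
  intros HL HR. rewrite !fval_app.
  destruct oL as [L|]; [destruct (HL L eq_refl) as [HL1 [HL2 HL3]]|];
  (destruct oR as [R|]; [destruct (HR R eq_refl) as [HR1 [HR2 HR3]]|]);
  unfold optl, fval, lsum, fold_right, fsum, alpha, beta, gamma, rho; fold (lsum (fun I => fsum x I ^ 2) inn);
  try rewrite (chasL x (fst L) p (snd L)) by lia;
  try rewrite (chasR x (fst R) q (snd R)) by lia; simpl; lra.
Qed.

Lemma pieces_bound (x : nat -> R) p q oL oR inn out : minimal_viol x p q ->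
  ffam (optl oL ++ optl oR ++ inn ++ out) ->
  (forall L, oL = Some L -> (fst L < p)%nat /\ (p <= snd L)%nat /\ (snd L < q)%nat) ->
  (forall R, oR = Some R -> (p < fst R)%nat /\ (fst R <= q)%nat /\ (q < snd R)%nat) ->
  (forall J, In J inn -> (p <= fst J)%nat /\ (snd J <= q)%nat /\ ((p < fst J)%nat \/ (snd J < q)%nat)) ->
  beta x p oL ^ 2 + rho x q oR ^ 2 + fval x inn <= sum_n_m (fun n => x n ^ 2) p q.
Proof.
  intros Hmin Hbig HL HR Hinn.
  set (pieces := optl (option_map (fun L => (p, snd L)) oL) ++ optl (option_map (fun R => (fst R, q)) oR) ++ inn).
  assert (Hlin : ffam (optl oL ++ optl oR ++ inn)).
  { rewrite !app_assoc in Hbig. apply ffam_app_inv in Hbig. destruct Hbig as [H _].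
    rewrite <- !app_assoc in H. exact H. }
  assert (Hpc : forall I, In I pieces -> (p <= fst I)%nat /\ (fst I <= snd I)%nat /\ (snd I <= q)%nat /\
                                   ((p < fst I)%nat \/ (snd I < q)%nat)).
  { intros I HI. unfold pieces in HI. apply in_app_or in HI. destruct HI as [HI|HI].
    - destruct oL as [L|]; simpl in HI; [|contradiction]. destruct HI as [<-|[]].
      destruct (HL L eq_refl); simpl; lia.
    - apply in_app_or in HI. destruct HI as [HI|HI].
      + destruct oR as [R|]; simpl in HI; [|contradiction]. destruct HI as [<-|[]].
        destruct (HR R eq_refl); simpl; lia.
      + pose proof (Hinn I HI). destruct Hlin as [Hv _]. rewrite Forall_forall in Hv.
        assert (In I (optl oL ++ optl oR ++ inn)) by (apply in_or_app; right; apply in_or_app; auto).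
        apply Hv in H0. unfold fvalid in H0. lia. }
  assert (Hpf : ffam pieces).
  { split.
    - rewrite Forall_forall. intros I HI. apply Hpc in HI. unfold fvalid; lia.
    - apply (FOP_sub _ (optl oL ++ optl oR ++ inn)); [|apply Hlin].
      unfold pieces. apply Forall2_app; [|apply Forall2_app].
      + destruct oL as [L|]; simpl; constructor; auto. destruct (HL L eq_refl); unfold sub; simpl; lia.
      + destruct oR as [R|]; simpl; constructor; auto. destruct (HR R eq_refl); unfold sub; simpl; lia.
      + apply Forall2_refl_sub. intros; unfold sub; lia. }
  assert (Hv : fval x pieces = beta x p oL ^ 2 + rho x q oR ^ 2 + fval x inn).
  { unfold pieces. rewrite !fval_app. destruct oL, oR; unfold beta, rho, fval, lsum, fold_right, fsum; simpl; lra. }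
  rewrite <- Hv. eapply Rle_trans; [|apply (count_le _ p q pieces); auto].
  - unfold fval. apply lsum_le. intros I HI. destruct (Hpc I HI) as [H1 [H2 [H3 H4]]]. apply Hmin; auto.
  - intros; nra.
  - intros I HI. destruct (Hpc I HI); lia.
Qed.

Lemma beta_sign (x : nat -> R) p q oL : minimal_viol x p q ->
  sum_n_m (fun n => x n ^ 2) p q < (sum_n_m x p q) ^ 2 ->
  (forall L, oL = Some L -> (fst L < p)%nat /\ (p <= snd L)%nat /\ (snd L < q)%nat) ->
  beta x p oL * (sum_n_m x p q - beta x p oL) >= 0.
Proof.
  intros Hmin Hv HL. destruct oL as [L|]; simpl; [|lra]. destruct (HL L eq_refl) as [H1 [H2 H3]].
  pose proof (Hmin p (snd L) ltac:(lia) ltac:(lia) ltac:(lia) ltac:(lia)) as Ha.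
  pose proof (Hmin (S (snd L)) q ltac:(lia) ltac:(lia) ltac:(lia) ltac:(lia)) as Hb.
  rewrite (chasR x p (snd L) q) in Hv |- * by lia.
  rewrite (chasR (fun n => x n ^ 2) p (snd L) q) in Hv by lia. nra.
Qed.

Lemma rho_sign (x : nat -> R) p q oR : minimal_viol x p q ->
  sum_n_m (fun n => x n ^ 2) p q < (sum_n_m x p q) ^ 2 ->
  (forall R, oR = Some R -> (p < fst R)%nat /\ (fst R <= q)%nat /\ (q < snd R)%nat) ->
  rho x q oR * (sum_n_m x p q - rho x q oR) >= 0.
Proof.
  intros Hmin Hv HR. destruct oR as [R|]; simpl; [|lra]. destruct (HR R eq_refl) as [H1 [H2 H3]].
  pose proof (Hmin p (pred (fst R)) ltac:(lia) ltac:(lia) ltac:(lia) ltac:(lia)) as Ha.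
  pose proof (Hmin (fst R) q ltac:(lia) ltac:(lia) ltac:(lia) ltac:(lia)) as Hb.
  rewrite (chasL x p (fst R) q) in Hv |- * by lia.
  rewrite (chasL (fun n => x n ^ 2) p (fst R) q) in Hv by lia. nra.
Qed.

Lemma claimB (x : nat -> R) p q : (p < q)%nat -> FB x 1 ->
  sum_n_m (fun n => x n ^ 2) p q < (sum_n_m x p q) ^ 2 -> minimal_viol x p q ->
  forall l, ffam l -> (forall I, In I l -> ~ ((fst I <= p)%nat /\ (q <= snd I)%nat)) ->
  fval x l + ((sum_n_m x p q) ^ 2 - sum_n_m (fun n => x n ^ 2) p q) <= 1.
Proof.
  intros Hpq HB Hv Hmin l Hl Hnc.
  destruct (decomp p q l Hl Hnc) as [oL [oR [inn [out [Hperm [HoL [HoR [Hinn Hout]]]]]]]].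
  assert (Hbig : ffam (optl oL ++ optl oR ++ inn ++ out)) by (eapply ffam_perm; eauto).
  rewrite (fval_perm _ _ _ Hperm). rewrite !app_assoc. rewrite !app_assoc in Hbig.
  set (S0 := sum_n_m x p q) in *.
  assert (HeLx : exists eL : bool, (oL = None -> eL = false) /\
     (if eL then alpha x p oL * S0 > 0 else alpha x p oL * S0 <= 0)).
  { destruct (Rlt_dec 0 (alpha x p oL * S0)).
    - exists true. split; [intros ->; unfold alpha in *; lra|lra].
    - exists false. split; auto; lra. }
  destruct HeLx as [eL [HeL HsL]].
  assert (HeRx : exists eR : bool, (oR = None -> eR = false) /\
     (if eR then gamma x q oR * S0 > 0 else gamma x q oR * S0 <= 0)).
  { destruct (Rlt_dec 0 (gamma x q oR * S0)).
    - exists true. split; [intros ->; unfold gamma in *; lra|lra].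
    - exists false. split; auto; lra. }
  destruct HeRx as [eR [HeR HsR]].
  destruct (newfam_ok x p q oL oR eL eR ltac:(lia) HeL HeR HoL HoR) as [Hnf [Hnb Hnv]].
  apply (replace_lemma x _ out (newfam p q oL oR eL eR) (lo oL p) (hi oR q)); auto.
  rewrite <- !app_assoc. rewrite (fval_lin x p q oL oR inn HoL HoR). rewrite Hnv.
  rewrite <- !app_assoc in Hbig.
  pose proof (pieces_bound x p q oL oR inn out Hmin Hbig HoL HoR Hinn) as Hpb.
  pose proof (beta_sign x p q oL Hmin Hv HoL) as Hbs.
  pose proof (rho_sign x p q oR Hmin Hv HoR) as Hrs.
  apply alg_all; auto.
Qed.

Lemma lsum_mult {A} c (f : A -> R) l : lsum (fun a => c * f a) l = c * lsum f l.
Proof. induction l; simpl; [lra|]. unfold lsum in *; simpl. rewrite IHl. lra. Qed.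

Lemma FB_inBJ z : FB z 1 -> in_BJ z.
Proof.
  intros HB. unfold in_BJ, Jnorm. destruct (Lub_Rbar_correct (Jvalues z)) as [_ Hl].
  apply Hl. intros v [l [Hv [Hd ->]]]. simpl. rewrite <- sqrt_1. apply sqrt_le_1_alt.
  apply (FB_gen z 1 HB l Hv Hd).
Qed.

Lemma FOP_In {A} (R1 : A -> A -> Prop) l a b : ForallOrdPairs R1 l -> In a l -> In b l -> a <> b -> R1 a b \/ R1 b a.
Proof.
  induction 1; intros Ha Hb Hab; [contradiction|].
  destruct Ha as [<-|Ha]; destruct Hb as [<-|Hb].
  - congruence.
  - left. rewrite Forall_forall in H. auto.
  - right. rewrite Forall_forall in H. auto.
  - auto.
Qed.

Lemma sum_delta (v : R) c a b : (a <= b)%nat ->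
  sum_n_m (fun n => if Nat.eqb n c then v else 0) a b = if inI (a, b) c then v else 0.
Proof.
  intros Hab. rewrite (sum_n_m_ext _ (fun n => if inI (c, c) n then (fun _ => v) n else 0)).
  - replace b with (a + (b - a))%nat by lia. rewrite sum_restr.
    destruct (Nat.max a c <=? Nat.min (a + (b - a))%nat c) eqn:E; destruct (inI (a, (a + (b - a))%nat) c) eqn:E2.
    + apply Nat.leb_le in E. replace (Nat.max a c) with c by lia. replace (Nat.min (a + (b - a))%nat c) with c by lia.
      apply sum_n_n.
    + apply Nat.leb_le in E. apply inI_false in E2. simpl in E2. lia.
    + apply Nat.leb_gt in E. apply inI_iff in E2. simpl in E2. lia.
    + reflexivity.
  - intros n. destruct (Nat.eqb n c) eqn:E; destruct (inI (c, c) n) eqn:E2; auto.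
    + apply Nat.eqb_eq in E; apply inI_false in E2; simpl in E2; lia.
    + apply Nat.eqb_neq in E; apply inI_iff in E2; simpl in E2; lia.
Qed.

Definition pert p q (e : R) (n : nat) : R := (if Nat.eqb n p then e else 0) + (if Nat.eqb n q then - e else 0).

Lemma fsum_pert p q e I : fvalid I ->
  fsum (pert p q e) I = (if inI I p then e else 0) + (if inI I q then - e else 0).
Proof.
  intros Hv. destruct I as [a b]. unfold fsum, pert, fvalid in *; simpl in *.
  rewrite sum_plusR. rewrite !sum_delta by lia. reflexivity.
Qed.

Lemma FB_single z I : FB z 1 -> fvalid I -> Rabs (fsum z I) <= 1.
Proof.
  intros HB Hv. assert (H : ffam (I :: nil)).
  { split; repeat constructor; auto. }
  apply HB in H. unfold fval, lsum, fold_right in H.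
  apply Rabs_le. assert (fsum z I ^ 2 <= 1) by lra. nra.
Qed.

Lemma FB_pert (x : nat -> R) p q e eta : (p < q)%nat -> FB x 1 ->
  (forall l, ffam l -> (forall I, In I l -> ~ ((fst I <= p)%nat /\ (q <= snd I)%nat)) -> fval x l + eta <= 1) ->
  4 * Rabs e + 2 * e ^ 2 <= eta ->
  FB (fun n => x n + pert p q e n) 1.
Proof.
  intros Hpq HB HC He l Hl.
  assert (Hs : forall I, fvalid I -> fsum (fun n => x n + pert p q e n) I = fsum x I + fsum (pert p q e) I).
  { intros [a b] _. unfold fsum; simpl. apply sum_plusR. }
  destruct Hl as [Hv Hd]. rewrite Forall_forall in Hv.
  destruct (classic (exists I, In I l /\ (fst I <= p)%nat /\ (q <= snd I)%nat)) as [[I [HI Hc]]|Hnc].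
  - assert (Hz : forall J, In J l -> fsum (pert p q e) J = 0).
    { intros J HJ. rewrite fsum_pert by auto. destruct (classic (J = I)) as [->|Hne].
      + rewrite (proj2 (inI_iff I p)), (proj2 (inI_iff I q)) by (pose proof (Hv I HI); unfold fvalid in *; lia). lra.
      + destruct (FOP_In _ _ _ _ Hd HI HJ (not_eq_sym Hne)) as [Hdj|Hdj];
        (destruct (inI J p) eqn:E1; [apply inI_iff in E1; unfold fdisj in Hdj; lia|]);
        (destruct (inI J q) eqn:E2; [apply inI_iff in E2; unfold fdisj in Hdj; lia|]); lra. }
    unfold fval. rewrite (lsum_ext _ (fun J => fsum x J ^ 2)).
    + apply (HB l). split; auto. rewrite Forall_forall; auto.
    + intros J HJ. rewrite Hs, Hz; auto. f_equal; lra.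
  - assert (Hx : fval x l + eta <= 1).
    { apply HC. split; auto; rewrite Forall_forall; auto. intros I HI Hc. apply Hnc. exists I; auto. }
    assert (Hcp : lsum (fun J => if inI J p then 1 else 0) l <= 1) by (apply count_pt; auto; lra).
    assert (Hcq : lsum (fun J => if inI J q then 1 else 0) l <= 1) by (apply count_pt; auto; lra).
    assert (Hle : fval (fun n => x n + pert p q e n) l <=
       fval x l + lsum (fun J => (2 * Rabs e + e ^ 2) * ((if inI J p then 1 else 0) + (if inI J q then 1 else 0))) l).
    { unfold fval. rewrite <- lsum_plus. apply lsum_le. intros J HJ. rewrite Hs by auto.
      rewrite fsum_pert by auto. pose proof (FB_single x J HB (Hv J HJ)) as Hb.
      set (s := fsum x J) in *. apply Rabs_le_between in Hb. pose proof (Rabs_pos e).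
      destruct (inI J p), (inI J q).
      - assert (Heq : e + - e = 0) by lra. rewrite Heq. nra.
      - destruct (Rle_dec 0 e); [rewrite Rabs_right in * by lra|rewrite Rabs_left in * by lra]; nra.
      - destruct (Rle_dec 0 e); [rewrite Rabs_right in * by lra|rewrite Rabs_left in * by lra]; nra.
      - nra. }
    assert (Hl2 : lsum (fun J => (2 * Rabs e + e ^ 2) * ((if inI J p then 1 else 0) + (if inI J q then 1 else 0))) l
                  <= (2 * Rabs e + e ^ 2) * 2).
    { rewrite (lsum_ext _ (fun J => (2 * Rabs e + e ^ 2) * (if inI J p then 1 else 0) +
                                    (2 * Rabs e + e ^ 2) * (if inI J q then 1 else 0))) by (intros; lra).
      rewrite lsum_plus.
      assert (Hm : forall f : nat * nat -> R, lsum (fun J => (2 * Rabs e + e ^ 2) * f J) l = (2 * Rabs e + e ^ 2) * lsum f l).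
      { intros f. apply lsum_mult. }
      rewrite (Hm (fun J => if inI J p then 1 else 0)), (Hm (fun J => if inI J q then 1 else 0)). pose proof (Rabs_pos e). assert (0 <= 2 * Rabs e + e ^ 2) by nra. nra. }
    lra.
Qed.

Lemma not_extreme (x : nat -> R) p q : (p < q)%nat -> FB x 1 ->
  sum_n_m (fun n => x n ^ 2) p q < (sum_n_m x p q) ^ 2 -> minimal_viol x p q -> ~ extreme_BJ x.
Proof.
  intros Hpq HB Hv Hmin [_ Hext].
  set (eta := (sum_n_m x p q) ^ 2 - sum_n_m (fun n => x n ^ 2) p q).
  assert (Heta : 0 < eta) by (unfold eta; lra).
  assert (HS : (sum_n_m x p q) ^ 2 <= 1).
  { pose proof (FB_single x (p, q) HB ltac:(unfold fvalid; simpl; lia)) as H. unfold fsum in H; simpl in H.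
    apply Rabs_le_between in H. nra. }
  assert (HQ : 0 <= sum_n_m (fun n => x n ^ 2) p q) by (apply sum_nonneg; intros; nra).
  set (del := eta / 6).
  assert (Hdel : 0 < del) by (unfold del; lra).
  assert (Hd1 : 4 * Rabs del + 2 * del ^ 2 <= eta).
  { rewrite Rabs_right by lra. unfold del. assert (eta <= 1) by (unfold eta in *; lra). nra. }
  assert (Hd2 : 4 * Rabs (- del) + 2 * (- del) ^ 2 <= eta).
  { rewrite Rabs_Ropp. replace ((- del) ^ 2) with (del ^ 2) by ring. exact Hd1. }
  pose proof (claimB x p q Hpq HB Hv Hmin) as HC.
  assert (H1 := FB_inBJ _ (FB_pert x p q del eta Hpq HB HC Hd1)).
  assert (H2 := FB_inBJ _ (FB_pert x p q (- del) eta Hpq HB HC Hd2)).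
  assert (Heq := Hext _ _ (/ 2) H1 H2 ltac:(lra)).
  assert (Hu : (fun n => x n + pert p q del n) = (fun n => x n + pert p q (- del) n)).
  { apply Heq. intros n. unfold pert. destruct (Nat.eqb n p), (Nat.eqb n q); lra. }
  assert (Hp := f_equal (fun f => f p) Hu). cbv beta in Hp.
  unfold pert in Hp. rewrite Nat.eqb_refl in Hp. rewrite (proj2 (Nat.eqb_neq p q)) in Hp by lia. lra.
Qed.

Lemma extreme_NV (x : nat -> R) : FB x 1 -> extreme_BJ x -> NV x.
Proof.
  intros HB Hext.
  assert (H : forall n a b, (b - a)%nat = n -> (a <= b)%nat -> (sum_n_m x a b) ^ 2 <= sum_n_m (fun k => x k ^ 2) a b).
  { intros n. induction n as [n IH] using lt_wf_ind. intros a b Hn Hab.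
    destruct (Rle_dec ((sum_n_m x a b) ^ 2) (sum_n_m (fun k => x k ^ 2) a b)) as [Hle|Hgt]; auto.
    exfalso. apply Rnot_le_lt in Hgt.
    destruct (Nat.eq_dec a b) as [->|Hne].
    - rewrite !sum_n_n in Hgt. lra.
    - apply (not_extreme x a b ltac:(lia) HB Hgt); auto.
      intros a' b' H1 H2 H3 H4. apply (IH (b' - a')%nat); auto; lia. }
  intros a b Hab. apply (H (b - a)%nat); auto.
Qed.

Lemma ex_series_bounded (a : nat -> R) M : (forall n, 0 <= a n) -> (forall N, sum_n a N <= M) -> ex_series a.
Proof.
  intros H0 HM. destruct (ex_finite_lim_seq_incr (sum_n a) M) as [l Hl]; auto.
  - intros n. rewrite sum_Sn. pose proof (H0 (S n)). change (sum_n a n <= sum_n a n + a (S n)). lra.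
  - exists l. exact Hl.
Qed.

Lemma FB_sq_partial (x : nat -> R) : FB x 1 -> forall N, sum_n (fun n => x n ^ 2) N <= 1.
Proof.
  intros HB N. unfold sum_n. rewrite <- singletons_fval. apply HB. apply singletons_ffam.
Qed.

Lemma restrict_sum (w : nat -> R) I a b : valid_interval I -> (a <= b)%nat ->
  exists a' b', sum_n_m (fun n => if in_interval I n then w n else 0) a b =
                (if (a' <=? b')%nat then sum_n_m w a' b' else 0) /\ (a <= a')%nat /\ (b' <= b)%nat.
Proof.
  intros Hv Hab. destruct I as [c [e|]].
  - exists (Nat.max a c), (Nat.min (a + (b - a)) e). split; [|lia].
    replace b with (a + (b - a))%nat at 1 by lia. rewrite <- sum_restr. apply sum_n_m_ext. intros n.
    reflexivity.
  - exists (Nat.max a c), (Nat.min (a + (b - a)) b). split; [|lia].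
    replace b with (a + (b - a))%nat at 1 by lia. rewrite <- sum_restr. apply sum_n_m_ext_loc. intros n Hn.
    unfold in_interval, inI; simpl. rewrite Bool.andb_true_r. rewrite (proj2 (Nat.leb_le n b)) by lia.
    rewrite Bool.andb_true_r. reflexivity.
Qed.

Lemma NV_restrict (x : nat -> R) I : valid_interval I -> NV x -> NV (restrict x I).
Proof.
  intros Hv HN a b Hab. unfold restrict.
  destruct I as [c [e|]].
  - replace b with (a + (b - a))%nat by lia.
    rewrite (sum_n_m_ext (fun n => if in_interval (c, Some e) n then x n else 0)
                         (fun n => if inI (c, e) n then x n else 0)) by reflexivity.
    rewrite (sum_n_m_ext (fun n => (if in_interval (c, Some e) n then x n else 0) ^ 2)
                         (fun n => if inI (c, e) n then x n ^ 2 else 0)).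
    2: { intros n. unfold in_interval, inI; simpl. destruct (_ && _)%bool; simpl; ring. }
    rewrite !sum_restr. destruct (_ <=? _)%nat eqn:E; [apply HN; apply Nat.leb_le in E; auto|simpl; lra].
  - replace b with (a + (b - a))%nat by lia.
    rewrite (sum_n_m_ext_loc (fun n => if in_interval (c, None) n then x n else 0)
                         (fun n => if inI (c, (a + (b - a))%nat) n then x n else 0)).
    2: { intros n Hn. unfold in_interval, inI; simpl. rewrite Bool.andb_true_r.
         rewrite (proj2 (Nat.leb_le n (a + (b - a)))) by lia. rewrite Bool.andb_true_r. reflexivity. }
    rewrite (sum_n_m_ext_loc (fun n => (if in_interval (c, None) n then x n else 0) ^ 2)
                         (fun n => if inI (c, (a + (b - a))%nat) n then x n ^ 2 else 0)).
    2: { intros n Hn. unfold in_interval, inI; simpl.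
         rewrite (proj2 (Nat.leb_le n (a + (b - a)))) by lia. rewrite Bool.andb_true_r.
         destruct (c <=? n)%nat; simpl; ring. }
    rewrite !sum_restr. destruct (_ <=? _)%nat eqn:E; [apply HN; apply Nat.leb_le in E; auto|simpl; lra].
Qed.

Lemma part1 (x : nat -> R) (hx : Jnorm x = Finite 1) : extreme_BJ x ->
  forall I : interval, valid_interval I -> Jnorm (restrict x I) = Finite (l2norm (restrict x I)).
Proof.
  intros Hext I HI.
  assert (HB : FB x 1).
  { replace 1 with (1 ^ 2) by ring. apply FB_of_Jnorm; [lra|]. rewrite hx. simpl. lra. }
  assert (HN := NV_restrict x I HI (extreme_NV x HB Hext)).
  unfold l2norm. apply Jnorm_NV; auto.
  apply ex_series_bounded with 1.
  - intros; nra.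
  - intros N. eapply Rle_trans; [|apply (FB_sq_partial x HB N)].
    apply sum_n_m_le. intros n. unfold restrict. destruct (in_interval I n); simpl; nra.
Qed.

Definition inFb (F : option nat) (i : nat) : bool := match F with Some k => (i <? k)%nat | None => true end.

Lemma inFb_iff F i : inFb F i = true <-> inF F i.
Proof. destruct F; simpl; [apply Nat.ltb_lt|tauto]. Qed.

Lemma inF_down F i j : inF F j -> (i <= j)%nat -> inF F i.
Proof. destruct F; simpl; auto; lia. Qed.

Lemma in_int_fst I n : in_interval I n = true -> (fst I <= n)%nat.
Proof. unfold in_interval. intros H. apply andb_prop in H. destruct H as [H _]. apply Nat.leb_le; auto. Qed.

Lemma in_int_snd a e n : in_interval (a, Some e) n = true -> (n <= e)%nat.
Proof. unfold in_interval. intros H. apply andb_prop in H. destruct H as [_ H]. apply Nat.leb_le; auto. Qed.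

Lemma in_int_intro a o n : (a <= n)%nat -> (match o with Some e => (n <= e)%nat | None => True end) ->
  in_interval (a, o) n = true.
Proof.
  intros H1 H2. unfold in_interval; simpl. apply andb_true_intro. split; [apply Nat.leb_le; auto|].
  destruct o; auto. apply Nat.leb_le; auto.
Qed.

Lemma fam_order F fam : interval_family F fam ->
  forall d i, inF F (i + S d) -> exists e, snd (fam i) = Some e /\ (e < fst (fam (i + S d)))%nat.
Proof.
  intros [Hv Ho]. induction d; intros i Hi.
  - replace (i + 1)%nat with (S i) in * by lia. assert (Hi0 : inF F i) by (eapply inF_down; eauto).
    specialize (Ho i Hi0 Hi). destruct (snd (fam i)) as [e|]; [|contradiction]. exists e; auto.
  - destruct (IHd i (inF_down F (i + S d) (i + S (S d)) Hi ltac:(lia))) as [e [He1 He2]]. exists e. split; auto.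
    set (j := (i + S d)%nat) in *. replace (i + S (S d))%nat with (S j) in * by (unfold j; lia).
    assert (Hj : inF F j) by (eapply inF_down; eauto).
    specialize (Ho j Hj Hi). specialize (Hv j Hj). unfold valid_interval in Hv.
    destruct (snd (fam j)); [lia|contradiction].
Qed.

Lemma fam_before F fam : interval_family F fam -> forall i j n, (i < j)%nat -> inF F j ->
  in_interval (fam i) n = true -> (n < fst (fam j))%nat.
Proof.
  intros Hf i j n Hij Hj Hn. replace j with (i + S (j - S i))%nat in * by lia.
  destruct (fam_order F fam Hf _ _ Hj) as [e [He1 He2]].
  destruct (fam i) as [a o] eqn:E. simpl in He1. subst o. apply in_int_snd in Hn. lia.
Qed.

Lemma fam_disj F fam : interval_family F fam -> forall i j, (i < j)%nat -> inF F j ->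
  disjoint_intervals (fam i) (fam j).
Proof.
  intros Hf i j Hij Hj n [H1 H2]. apply (fam_before F fam Hf i j n Hij Hj) in H1.
  apply in_int_fst in H2. lia.
Qed.

Lemma famlist_ok F fam L : interval_family F fam ->
  List.Forall (inF F) L -> ForallOrdPairs (fun i j => (i < j)%nat) L ->
  List.Forall valid_interval (map fam L) /\ ForallOrdPairs disjoint_intervals (map fam L).
Proof.
  intros Hf HL Ho. split.
  - rewrite Forall_forall in *. intros I HI. apply in_map_iff in HI. destruct HI as [i [<- Hi]].
    apply (proj1 Hf). auto.
  - apply (FOP_map (fun i j => (i < j)%nat) disjoint_intervals fam (inF F)); auto. intros i j Hi Hj Hij. apply (fam_disj F); auto.
Qed.

Lemma filter_seq_ok F a n : List.Forall (inF F) (filter (inFb F) (seq a n)) /\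
  ForallOrdPairs (fun i j => (i < j)%nat) (filter (inFb F) (seq a n)).
Proof.
  split.
  - rewrite Forall_forall. intros i Hi. apply filter_In in Hi. apply inFb_iff; tauto.
  - apply FOP_filter. apply FOP_seq.
Qed.

Lemma lsum_filter_ind {A} (f : A -> R) P l : lsum f (filter P l) = lsum (fun i => if P i then f i else 0) l.
Proof. induction l; simpl; auto. destruct (P a); simpl; rewrite IHl; lra. Qed.

Lemma sumsq_famlist (x : nat -> R) F fam a n :
  sumsq (map (isum x) (map fam (filter (inFb F) (seq a n)))) =
  lsum (fun i => if inFb F i then isum x (fam i) ^ 2 else 0) (seq a n).
Proof. rewrite map_map, sumsq_lsum, lsum_filter_ind. reflexivity. Qed.

Lemma sumsq_app l1 l2 : sumsq (l1 ++ l2) = sumsq l1 + sumsq l2.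
Proof. induction l1; simpl; [lra|]. rewrite IHl1; lra. Qed.

Definition GB (x : nat -> R) := forall l, List.Forall valid_interval l -> ForallOrdPairs disjoint_intervals l ->
  sumsq (map (isum x) l) <= 1.

Definition gF (x : nat -> R) F fam N := lsum (fun i => if inFb F i then isum x (fam i) ^ 2 else 0) (seq 0 N).

Lemma G1 x F fam : GB x -> interval_family F fam -> forall N, gF x F fam N <= 1.
Proof.
  intros HG Hf N. unfold gF. rewrite <- sumsq_famlist. destruct (filter_seq_ok F 0 N) as [H1 H2].
  destruct (famlist_ok F fam _ Hf H1 H2). apply HG; auto.
Qed.

Lemma gF_nonneg x F fam N : 0 <= gF x F fam N.
Proof. apply lsum_nonneg. intros; destruct inFb; nra. Qed.

Lemma G2 x F fam : GB x -> interval_family F fam -> Fsumsq F (fun i => isum x (fam i)) = 1 ->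
  forall eps, 0 < eps -> exists N, 1 - eps < gF x F fam N.
Proof.
  intros HG Hf Hs eps He. destruct F as [k0|].
  - exists k0. unfold gF. simpl in Hs. rewrite (lsum_ext _ (fun i => isum x (fam i) ^ 2)).
    + change (lsum (fun i => isum x (fam i) ^ 2) (seq 0 k0) = 1) in Hs. lra.
    + intros i Hi. apply in_seq in Hi. simpl. rewrite (proj2 (Nat.ltb_lt i k0)) by lia. reflexivity.
  - change (Series (fun i => isum x (fam i) ^ 2) = 1) in Hs.
    assert (Hb : forall N, sum_n (fun i => isum x (fam i) ^ 2) N <= 1).
    { intros N. pose proof (G1 x None fam HG Hf (S N)) as H. unfold gF in H. simpl inFb in H.
      rewrite lsum_seq in H. exact H. }
    assert (Hex : ex_series (fun i => isum x (fam i) ^ 2)) by (apply (ex_series_bounded _ 1); auto; intros; nra).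
    pose proof (ex_series_lim _ Hex) as Hl. rewrite Hs in Hl.
    apply is_lim_seq_spec in Hl. destruct (Hl (mkposreal eps He)) as [N HN].
    exists (S N). unfold gF; simpl inFb. rewrite lsum_seq. replace (0 + N)%nat with N by lia.
    specialize (HN N (le_n N)).
    apply Rabs_lt_between in HN. unfold sum_n in HN. change (pos (mkposreal eps He)) with eps in HN.
    lra.
Qed.

Lemma gap_zero x F fam : GB x -> interval_family F fam -> Fsumsq F (fun i => isum x (fam i)) = 1 ->
  forall n, (forall i, inF F i -> in_interval (fam i) n = false) -> x n = 0.
Proof.
  intros HG Hf Hs n Hn.
  assert (Hle : forall N, gF x F fam N + x n ^ 2 <= 1).
  { intros N. destruct (filter_seq_ok F 0 N) as [H1 H2].
    destruct (famlist_ok F fam _ Hf H1 H2) as [H3 H4].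
    set (l := map fam (filter (inFb F) (seq 0 N)) ++ (n, Some n) :: nil).
    assert (Hv : List.Forall valid_interval l).
    { apply Forall_app; split; auto. constructor; auto. unfold valid_interval; simpl; lia. }
    assert (Hd : ForallOrdPairs disjoint_intervals l).
    { apply FOP_app; auto. repeat constructor.
      intros I J HI [<-|[]]. apply in_map_iff in HI. destruct HI as [i [<- Hi]].
      apply filter_In in Hi. destruct Hi as [_ Hi]. apply inFb_iff in Hi.
      intros m [Hm1 Hm2]. unfold in_interval in Hm2; simpl in Hm2.
      apply andb_prop in Hm2. destruct Hm2 as [Hm2 Hm3]. apply Nat.leb_le in Hm2, Hm3.
      replace m with n in Hm1 by lia. rewrite Hn in Hm1; [discriminate|auto]. }
    pose proof (HG l Hv Hd) as H. unfold l in H. rewrite map_app, sumsq_app, sumsq_famlist in H.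
    change (sumsq (map (isum x) ((n, Some n) :: nil))) with ((sum_n_m x n n) ^ 2 + 0) in H.
    unfold gF. rewrite sum_n_n in H. lra. }
  apply NNPP. intros Hx. assert (Hp : 0 < x n ^ 2) by (apply pow2_gt_0; auto).
  destruct (G2 x F fam HG Hf Hs (x n ^ 2) Hp) as [N HN]. specialize (Hle N). lra.
Qed.

Lemma series_split (x : nat -> R) a c : ex_series (fun k => x (a + k)%nat) -> (a < c)%nat ->
  Series (fun k => x (a + k)%nat) = sum_n_m x a (pred c) + Series (fun k => x (c + k)%nat).
Proof.
  intros He Hac. rewrite (Series_incr_n _ (c - a)) by (auto; lia).
  rewrite <- sum_n_Reals. rewrite <- sum_shift0. replace (a + pred (c - a))%nat with (pred c) by lia.
  f_equal. apply Series_ext. intros n. f_equal. lia.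
Qed.

Lemma sum_zero_loc (x : nat -> R) lo hi : (forall n, (lo <= n <= hi)%nat -> x n = 0) -> sum_n_m x lo hi = 0.
Proof. intros H. rewrite (sum_n_m_ext_loc _ (fun _ => 0)) by auto. apply sum_zeroR. Qed.

Lemma fst_le F fam : interval_family F fam -> forall i j, (i <= j)%nat -> inF F j -> (fst (fam i) <= fst (fam j))%nat.
Proof.
  intros Hf i j Hij Hj. destruct (Nat.eq_dec i j) as [->|Hne]; [lia|].
  replace j with (i + S (j - S i))%nat in * by lia.
  destruct (fam_order F fam Hf _ _ Hj) as [e [He1 He2]].
  pose proof (proj1 Hf i (inF_down F i _ Hj ltac:(lia))) as Hv. unfold valid_interval in Hv.
  rewrite He1 in Hv. lia.
Qed.

Lemma gap_between x F fam : interval_family F fam ->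
  (forall n, (forall i, inF F i -> in_interval (fam i) n = false) -> x n = 0) ->
  forall j e1 n, inF F (S j) -> snd (fam j) = Some e1 -> (e1 < n)%nat -> (n < fst (fam (S j)))%nat -> x n = 0.
Proof.
  intros Hf Hgap j e1 n Hj He1 Hn1 Hn2. apply Hgap. intros i Hi.
  destruct (in_interval (fam i) n) eqn:E; auto. exfalso.
  destruct (lt_eq_lt_dec i j) as [[Hlt|Heq]|Hgt].
  - apply (fam_before F fam Hf i j n Hlt (inF_down F j (S j) Hj ltac:(lia))) in E.
    pose proof (proj1 Hf j (inF_down F j (S j) Hj ltac:(lia))) as Hv. unfold valid_interval in Hv.
    rewrite He1 in Hv. lia.
  - subst i. destruct (fam j) as [a o] eqn:Ef. simpl in He1. subst o. apply in_int_snd in E. lia.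
  - apply in_int_fst in E. pose proof (fst_le F fam Hf (S j) i ltac:(lia) Hi). lia.
Qed.

Lemma hull_fin x F fam : interval_family F fam ->
  (forall n, (forall i, inF F i -> in_interval (fam i) n = false) -> x n = 0) ->
  forall d i0 e, inF F (i0 + d)%nat -> snd (fam (i0 + d)%nat) = Some e ->
  sum_n_m x (fst (fam i0)) e = sum_n_m (fun i => isum x (fam i)) i0 (i0 + d)%nat.
Proof.
  intros Hf Hgap. induction d; intros i0 e Hi He.
  - rewrite Nat.add_0_r in *. rewrite sum_n_n. unfold isum. rewrite He. reflexivity.
  - set (j := (i0 + d)%nat). replace (i0 + S d)%nat with (S j) in * by (unfold j; lia).
    assert (Hj : inF F j) by (apply (inF_down F j (S j)); auto).
    destruct (fam_order F fam Hf 0 j ltac:(rewrite Nat.add_1_r; auto)) as [e1 [He1 He2]].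
    rewrite Nat.add_1_r in He2.
    pose proof (IHd i0 e1 Hj He1) as IH. fold j in IH.
    pose proof (proj1 Hf (S j) Hi) as Hv'. unfold valid_interval in Hv'. rewrite He in Hv'.
    pose proof (proj1 Hf j Hj) as Hv. unfold valid_interval in Hv. rewrite He1 in Hv.
    pose proof (fst_le F fam Hf i0 j ltac:(unfold j; lia) Hj) as Hfl.
    rewrite (chasR x (fst (fam i0)) e1 e) by lia. rewrite IH.
    rewrite sum_SmR by lia. f_equal.
    set (c := fst (fam (S j))) in *.
    assert (Hc : sum_n_m x (S e1) e = sum_n_m x c e).
    { destruct (Nat.eq_dec (S e1) c) as [<-|Hne]; auto.
      rewrite (chasL x (S e1) c e) by lia. rewrite sum_zero_loc; [lra|].
      intros n Hn. apply (gap_between x F fam Hf Hgap j e1 n Hi He1); lia. }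
    rewrite Hc. unfold isum. rewrite He. reflexivity.
Qed.

Lemma hull_sum x F fam : interval_family F fam ->
  (forall n, (forall i, inF F i -> in_interval (fam i) n = false) -> x n = 0) ->
  (forall a, ex_series (fun k => x (a + k)%nat)) ->
  forall i0 i1, (i0 <= i1)%nat -> inF F i1 ->
  isum x (fst (fam i0), snd (fam i1)) = sum_n_m (fun i => isum x (fam i)) i0 i1.
Proof.
  intros Hf Hgap Hex i0 i1 Hi01 Hi1.
  destruct (snd (fam i1)) as [e|] eqn:He.
  - unfold isum; simpl. replace i1 with (i0 + (i1 - i0))%nat in * by lia. apply (hull_fin x F fam); auto.
  - destruct (Nat.eq_dec i0 i1) as [<-|Hne].
    + rewrite sum_n_n. unfold isum. simpl. rewrite He. reflexivity.
    + destruct i1 as [|j]; [lia|].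
      assert (Hj : inF F j) by (apply (inF_down F j (S j)); auto).
      destruct (fam_order F fam Hf 0 j ltac:(rewrite Nat.add_1_r; auto)) as [e1 [He1 He2]].
      rewrite Nat.add_1_r in He2.
      pose proof (proj1 Hf j Hj) as Hv. unfold valid_interval in Hv. rewrite He1 in Hv.
      pose proof (fst_le F fam Hf i0 j ltac:(lia) Hj) as Hfl.
      set (c := fst (fam (S j))) in *.
      unfold isum at 1; simpl. rewrite (series_split x (fst (fam i0)) c) by (auto; lia).
      rewrite (chasR x (fst (fam i0)) e1 (pred c)) by lia.
      rewrite (sum_zero_loc x (S e1) (pred c)).
      2: { intros n Hn. apply (gap_between x F fam Hf Hgap j e1 n Hi1 He1); lia. }
      replace j with (i0 + (j - i0))%nat in He1, Hj by lia.
      rewrite (hull_fin x F fam Hf Hgap (j - i0) i0 e1 Hj He1).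
      replace (i0 + (j - i0))%nat with j by lia.
      rewrite sum_SmR by lia. unfold isum at 3. rewrite He. unfold c. lra.
Qed.

Lemma gF_mono x F fam N N' : (N <= N')%nat -> gF x F fam N <= gF x F fam N'.
Proof.
  intros H. unfold gF. replace N' with (N + (N' - N))%nat by lia. rewrite seq_app, lsum_app.
  assert (0 <= lsum (fun i => if inFb F i then isum x (fam i) ^ 2 else 0) (seq (0 + N) (N' - N))).
  { apply lsum_nonneg; intros; destruct inFb; nra. }
  lra.
Qed.

Lemma NVb x F fam : GB x -> interval_family F fam -> Fsumsq F (fun i => isum x (fam i)) = 1 ->
  (forall n, (forall i, inF F i -> in_interval (fam i) n = false) -> x n = 0) ->
  (forall a, ex_series (fun k => x (a + k)%nat)) ->
  forall i0 i1, (i0 <= i1)%nat -> inF F i1 ->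
  (sum_n_m (fun i => isum x (fam i)) i0 i1) ^ 2 <= sum_n_m (fun i => isum x (fam i) ^ 2) i0 i1.
Proof.
  intros HG Hf Hs Hgap Hex i0 i1 H01 Hi1.
  set (b := fun i => isum x (fam i)).
  set (Hu := (fst (fam i0), snd (fam i1))).
  assert (Hval : forall N, (S i1 <= N)%nat ->
     (sum_n_m b i0 i1) ^ 2 - sum_n_m (fun i => b i ^ 2) i0 i1 <= 1 - gF x F fam N).
  { intros N HN.
    set (L1 := filter (inFb F) (seq 0 i0)). set (L2 := filter (inFb F) (seq (S i1) (N - S i1))).
    set (l := map fam L1 ++ Hu :: map fam L2).
    destruct (filter_seq_ok F 0 i0) as [HL1a HL1b]. destruct (filter_seq_ok F (S i1) (N - S i1)) as [HL2a HL2b].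
    destruct (famlist_ok F fam _ Hf HL1a HL1b) as [HV1 HD1].
    destruct (famlist_ok F fam _ Hf HL2a HL2b) as [HV2 HD2].
    assert (HL2g : forall j, In j L2 -> (i1 < j)%nat /\ inF F j).
    { intros j Hj. unfold L2 in Hj. apply filter_In in Hj. destruct Hj as [Hj1 Hj2]. apply in_seq in Hj1.
      apply inFb_iff in Hj2. split; auto; lia. }
    assert (HL1g : forall j, In j L1 -> (j < i0)%nat /\ inF F j).
    { intros j Hj. unfold L1 in Hj. apply filter_In in Hj. destruct Hj as [Hj1 Hj2]. apply in_seq in Hj1.
      apply inFb_iff in Hj2. split; auto; lia. }
    assert (Hi0 : inF F i0) by (apply (inF_down F i0 i1); auto).
    assert (HuR : forall n, in_interval Hu n = true -> (fst (fam i0) <= n)%nat /\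
                   (forall j, (i1 < j)%nat -> inF F j -> (n < fst (fam j))%nat)).
    { intros n Hn. split; [apply in_int_fst in Hn; auto|]. intros j Hj1 Hj2.
      replace j with (i1 + S (j - S i1))%nat in Hj2 |- * by lia.
      destruct (fam_order F fam Hf _ _ Hj2) as [e [He1 He2]]. unfold Hu in Hn. rewrite He1 in Hn.
      apply in_int_snd in Hn. lia. }
    assert (Hl : GB x -> sumsq (map (isum x) l) <= 1).
    { intros _. apply HG.
      - apply Forall_app; split; auto. constructor; auto. unfold Hu, valid_interval; simpl.
        destruct (snd (fam i1)) as [e|] eqn:He; auto.
        pose proof (proj1 Hf i1 Hi1) as Hv. unfold valid_interval in Hv. rewrite He in Hv.
        pose proof (fst_le F fam Hf i0 i1 H01 Hi1). lia.
      - apply FOP_app; auto.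
        + constructor; auto. rewrite Forall_forall. intros I HI. apply in_map_iff in HI.
          destruct HI as [j [<- Hj]]. destruct (HL2g j Hj) as [Hj1 Hj2].
          intros n [Hn1 Hn2]. apply HuR in Hn1. destruct Hn1 as [_ Hn1]. specialize (Hn1 j Hj1 Hj2).
          apply in_int_fst in Hn2. lia.
        + intros I J HI HJ. apply in_map_iff in HI. destruct HI as [i [<- Hi]]. destruct (HL1g i Hi) as [Hi1' Hi2'].
          destruct HJ as [<-|HJ].
          * intros n [Hn1 Hn2]. apply (fam_before F fam Hf i i0 n Hi1' Hi0) in Hn1. apply HuR in Hn2. lia.
          * apply in_map_iff in HJ. destruct HJ as [j [<- Hj]]. destruct (HL2g j Hj) as [Hj1 Hj2].
            apply (fam_disj F); auto. lia. }
    specialize (Hl HG). unfold l in Hl. rewrite map_app, sumsq_app in Hl. simpl map in Hl.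
    change (sumsq (isum x Hu :: map (isum x) (map fam L2))) with (isum x Hu ^ 2 + sumsq (map (isum x) (map fam L2))) in Hl.
    unfold L1, L2 in Hl. rewrite !sumsq_famlist in Hl.
    unfold Hu in Hl. rewrite (hull_sum x F fam Hf Hgap Hex i0 i1 H01 Hi1) in Hl.
    unfold gF. replace N with (i0 + (S (i1 - i0) + (N - S i1)))%nat by lia.
    rewrite !seq_app, !lsum_app. replace (0 + (i0 + S (i1 - i0)))%nat with (S i1) by lia.
    replace (0 + i0)%nat with i0 by lia.
    rewrite (lsum_ext _ (fun i => b i ^ 2) (seq i0 (S (i1 - i0)))).
    2: { intros i Hi. apply in_seq in Hi. rewrite (proj2 (inFb_iff F i)); auto.
         apply (inF_down F i i1); auto; lia. }
    rewrite lsum_seq. replace (i0 + (i1 - i0))%nat with i1 by lia.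
    replace (i0 + S (i1 - i0))%nat with (S i1) by lia.
    replace (i0 + (S (i1 - i0) + (N - S i1)) - S i1)%nat with (N - S i1)%nat by lia.
    fold b in Hl. lra. }
  apply NNPP. intros Hc. apply Rnot_le_lt in Hc.
  set (eps := (sum_n_m b i0 i1) ^ 2 - sum_n_m (fun i => b i ^ 2) i0 i1).
  assert (He : 0 < eps) by (unfold eps, b in *; lra).
  destruct (G2 x F fam HG Hf Hs eps He) as [N HN].
  pose proof (gF_mono x F fam N (Nat.max N (S i1)) ltac:(lia)).
  pose proof (Hval (Nat.max N (S i1)) ltac:(lia)). unfold eps in *. lra.
Qed.

Definition kinc F (k : nat -> nat) := forall i j, inF F i -> inF F j -> (i < j)%nat -> (k i < k j)%nat.

Lemma k_ge F k : kinc F k -> forall i, inF F i -> (i <= k i)%nat.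
Proof.
  intros Hk i. induction i; intros Hi; [lia|].
  assert (Hi' : inF F i) by (apply (inF_down F i (S i)); auto).
  pose proof (Hk i (S i) Hi' Hi ltac:(lia)). specialize (IHi Hi'). lia.
Qed.

Lemma k_mono F k : kinc F k -> forall i j, (i <= j)%nat -> inF F j -> (k i <= k j)%nat.
Proof.
  intros Hk i j Hij Hj. destruct (Nat.eq_dec i j) as [->|Hne]; [lia|].
  pose proof (Hk i j (inF_down F i j Hj Hij) Hj ltac:(lia)). lia.
Qed.

Lemma k_inj F k : kinc F k -> forall i j, inF F i -> inF F j -> k i = k j -> i = j.
Proof.
  intros Hk i j Hi Hj He. destruct (lt_eq_lt_dec i j) as [[H|H]|H]; auto.
  - pose proof (Hk i j Hi Hj H). lia.
  - pose proof (Hk j i Hj Hi H). lia.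
Qed.

Lemma sum_single (f : nat -> R) i lo hi : (forall j, j <> i -> f j = 0) -> (lo <= i <= hi)%nat ->
  sum_n_m f lo hi = f i.
Proof.
  intros H Hi. rewrite (sum_n_m_ext _ (fun n => if Nat.eqb n i then f i else 0)).
  - rewrite sum_delta by lia. rewrite (proj2 (inI_iff (lo, hi) i)) by (simpl; lia). reflexivity.
  - intros n. destruct (Nat.eqb n i) eqn:E. apply Nat.eqb_eq in E; subst; auto.
    apply Nat.eqb_neq in E. auto.
Qed.

Lemma ST F k (c y : nat -> R) (h : R -> R) : kinc F k -> is_sum_basis F c k y -> h 0 = 0 ->
  forall n M, (n <= M)%nat ->
  sum_n_m (fun i => if (inFb F i && Nat.eqb (k i) n)%bool then h (c i) else 0) 0 M = h (y n).
Proof.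
  intros Hk [Hy1 Hy2] Hh n M HnM.
  destruct (classic (exists i, inF F i /\ k i = n)) as [[i [Hi Hki]]|Hne].
  - rewrite (sum_single _ i).
    + rewrite (proj2 (inFb_iff F i) Hi), (proj2 (Nat.eqb_eq _ _) Hki). simpl. rewrite <- Hki, Hy1; auto.
    + intros j Hj. destruct (inFb F j) eqn:E1; simpl; auto. destruct (Nat.eqb (k j) n) eqn:E2; auto.
      apply inFb_iff in E1. apply Nat.eqb_eq in E2. exfalso. apply Hj. apply (k_inj F k Hk); auto. lia.
    + pose proof (k_ge F k Hk i Hi). lia.
  - rewrite Hy2. rewrite Hh. apply sum_zero_loc. intros j _.
    destruct (inFb F j) eqn:E1; simpl; auto. destruct (Nat.eqb (k j) n) eqn:E2; auto.
    apply inFb_iff in E1. apply Nat.eqb_eq in E2. exfalso. apply Hne. exists j; auto.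
    intros i Hi Hki. apply Hne. exists i; auto.
Qed.

Lemma S1 F k (c y : nat -> R) (h : R -> R) : kinc F k -> is_sum_basis F c k y -> h 0 = 0 ->
  forall bb a M, (bb <= M)%nat ->
  sum_n_m (fun n => h (y n)) a bb =
  sum_n_m (fun i => if (inFb F i && (a <=? k i) && (k i <=? bb))%bool then h (c i) else 0) 0 M.
Proof.
  intros Hk Hy Hh bb. induction bb as [|bb IHbb]; intros a M HM.
  - destruct a.
    + rewrite sum_n_n. rewrite <- (ST F k c y h Hk Hy Hh 0 M HM). apply sum_n_m_ext. intros i.
      destruct (inFb F i); simpl; auto. destruct (k i); simpl; auto.
    + rewrite sum_emptyR by lia. symmetry. apply sum_zero_loc. intros i _.
      destruct (Nat.leb_spec (S a) (k i)); destruct (Nat.leb_spec (k i) 0); try lia;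
      rewrite ?Bool.andb_false_r; reflexivity.
  - destruct (le_lt_dec a (S bb)) as [Ha|Ha].
    + rewrite sum_SmR by lia. rewrite (IHbb a M) by lia. rewrite <- (ST F k c y h Hk Hy Hh (S bb) M HM).
      rewrite <- sum_plusR. apply sum_n_m_ext. intros i.
      destruct (inFb F i); [|simpl; lra]. rewrite !Bool.andb_true_l.
      destruct (Nat.leb_spec a (k i)); destruct (Nat.leb_spec (k i) bb); destruct (Nat.leb_spec (k i) (S bb));
        destruct (Nat.eqb_spec (k i) (S bb)); try lia; simpl; lra.
    + rewrite sum_emptyR by lia. symmetry. apply sum_zero_loc. intros i _.
      destruct (Nat.leb_spec a (k i)); destruct (Nat.leb_spec (k i) (S bb)); try lia;
      rewrite ?Bool.andb_false_r; reflexivity.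
Qed.

Lemma ex_min (P : nat -> Prop) : (exists n, P n) -> exists m, P m /\ forall j, P j -> (m <= j)%nat.
Proof.
  intros [n Hn]. apply NNPP. intros Hc.
  assert (H : forall n j, (j <= n)%nat -> ~ P j).
  { induction n0 as [n0 IH] using lt_wf_ind. intros j Hj Pj. apply Hc. exists j. split; auto.
    intros j' Pj'. destruct (le_lt_dec j j'); auto. exfalso. apply (IH j' ltac:(lia) j'); auto. }
  apply (H n n); auto.
Qed.

Lemma ex_max (P : nat -> Prop) M : (exists n, P n) -> (forall j, P j -> (j <= M)%nat) ->
  exists m, P m /\ forall j, P j -> (j <= m)%nat.
Proof.
  revert P. induction M; intros P [n Hn] HM.
  - exists 0%nat. pose proof (HM n Hn). replace n with 0%nat in Hn by lia. split; auto.
  - destruct (classic (P (S M))) as [HS|HS].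
    + exists (S M). split; auto.
    + apply IHM; [exists n; auto|]. intros j Hj. pose proof (HM j Hj).
      destruct (Nat.eq_dec j (S M)) as [->|]; [contradiction|lia].
Qed.

Lemma NV_y F k (c y : nat -> R) : kinc F k -> is_sum_basis F c k y ->
  (forall i0 i1, (i0 <= i1)%nat -> inF F i1 -> (sum_n_m c i0 i1) ^ 2 <= sum_n_m (fun i => c i ^ 2) i0 i1) ->
  NV y.
Proof.
  intros Hk Hy HNc a bb Hab.
  rewrite (sum_n_m_ext y (fun n => (fun r => r) (y n))) by reflexivity.
  rewrite (S1 F k c y (fun r => r) Hk Hy eq_refl bb a bb) by lia.
  rewrite (S1 F k c y (fun r => r ^ 2) Hk Hy ltac:(simpl; ring) bb a bb) by lia.
  set (P := fun j => inF F j /\ (a <= k j)%nat /\ (k j <= bb)%nat).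
  assert (HP : forall j, (inFb F j && (a <=? k j) && (k j <=? bb))%bool = true <-> P j).
  { intros j. unfold P. rewrite !Bool.andb_true_iff, inFb_iff, !Nat.leb_le. tauto. }
  destruct (classic (exists j, P j)) as [Hex|Hne].
  - destruct (ex_min P Hex) as [i0 [Pi0 Hi0]].
    assert (HPb : forall j, P j -> (j <= bb)%nat).
    { intros j [H1 [H2 H3]]. pose proof (k_ge F k Hk j H1). lia. }
    destruct (ex_max P bb Hex HPb) as [i1 [Pi1 Hi1]].
    assert (Hint : forall j, P j <-> (i0 <= j <= i1)%nat).
    { intros j. split; [intros Pj; split; auto|].
      intros Hj. destruct Pi0 as [A0 [B0 C0]]. destruct Pi1 as [A1 [B1 C1]].
      assert (inF F j) by (apply (inF_down F j i1); auto; lia).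
      pose proof (k_mono F k Hk i0 j ltac:(lia) H). pose proof (k_mono F k Hk j i1 ltac:(lia) A1).
      unfold P; repeat split; auto; lia. }
    assert (Hb1 : (i1 <= bb)%nat) by (apply HPb; auto).
    assert (Hi01 : (i0 <= i1)%nat) by (apply Hi0; auto).
    assert (Hext : forall (f : nat -> R), sum_n_m (fun i => if (inFb F i && (a <=? k i) && (k i <=? bb))%bool then f i else 0) 0 bb
                                  = sum_n_m f i0 i1).
    { intros f. rewrite <- (sum_restr' f 0 bb i0 i1) by lia. apply sum_n_m_ext. intros j.
      destruct (inFb F j && (a <=? k j) && (k j <=? bb))%bool eqn:E; destruct (inI (i0, i1) j) eqn:E2; auto.
      - apply HP in E. apply Hint in E. apply inI_false in E2. simpl in E2. lia.
      - apply inI_iff in E2. simpl in E2. apply Hint in E2. apply HP in E2. congruence. }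
    rewrite (Hext c), (Hext (fun i => c i ^ 2)). apply HNc; auto. destruct Pi1; auto.
  - rewrite !sum_zero_loc; [simpl; lra| |].
    + intros j _. destruct (_ && _ && _)%bool eqn:E; auto. exfalso. apply Hne. exists j. apply HP; auto.
    + intros j _. destruct (_ && _ && _)%bool eqn:E; auto. exfalso. apply Hne. exists j. apply HP; auto.
Qed.

Lemma sum_extR (a b : nat -> R) n m : (forall k, a k = b k) -> sum_n_m a n m = sum_n_m b n m.
Proof. intros H; apply sum_n_m_ext; exact H. Qed.

Lemma kb_spec (k : nat -> nat) N0 : forall i, In i (seq 0 N0) -> (k i <= fold_right Nat.max 0%nat (map k (seq 0 N0)))%nat.
Proof.
  intros i Hi. induction (seq 0 N0) as [|a l IH]; simpl in *; [contradiction|].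
  destruct Hi as [->|Hi]; [lia|]. specialize (IH Hi). lia.
Qed.

Lemma y_series F k (c y : nat -> R) : kinc F k -> is_sum_basis F c k y ->
  (forall N, lsum (fun i => if inFb F i then c i ^ 2 else 0) (seq 0 N) <= 1) ->
  (forall eps, 0 < eps -> exists N, 1 - eps < lsum (fun i => if inFb F i then c i ^ 2 else 0) (seq 0 N)) ->
  is_series (fun n => y n ^ 2) 1.
Proof.
  intros Hk Hy Hg1 Hg2.
  set (f := fun N i => if (inFb F i && (0 <=? k i) && (k i <=? N))%bool then c i ^ 2 else 0).
  assert (HT : forall N, sum_n (fun n => y n ^ 2) N = sum_n_m (f N) 0 N).
  { intros N. unfold sum_n. apply (S1 F k c y (fun r => r ^ 2) Hk Hy ltac:(simpl; ring) N 0 N); lia. }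
  assert (Hup : forall N, sum_n (fun n => y n ^ 2) N <= 1).
  { intros N. rewrite HT. eapply Rle_trans; [|apply (Hg1 (S N))]. rewrite lsum_seq. simpl.
    apply sum_n_m_le. intros i. unfold f. destruct (inFb F i); simpl; [|lra].
    destruct (k i <=? N)%nat; simpl; nra. }
  assert (Hlow : forall eps, 0 < eps -> exists N1, forall N, (N1 <= N)%nat -> 1 - eps < sum_n (fun n => y n ^ 2) N).
  { intros eps He. destruct (Hg2 eps He) as [N0 HN0].
    set (Kb := fold_right Nat.max 0%nat (map k (seq 0 N0))).
    exists (Nat.max Kb N0). intros N HN. rewrite HT.
    assert (E : sum_n_m (f N) 0 N = lsum (f N) (seq 0 (S N))) by (rewrite lsum_seq; reflexivity).
    rewrite E. replace (S N) with (N0 + (S N - N0))%nat by lia.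
    rewrite seq_app, lsum_app.
    assert (H1 : lsum (f N) (seq 0 N0) = lsum (fun i => if inFb F i then c i ^ 2 else 0) (seq 0 N0)).
    { apply lsum_ext. intros i Hi. pose proof (kb_spec k N0 i Hi). fold Kb in H. unfold f.
      rewrite (proj2 (Nat.leb_le 0 (k i))) by lia. rewrite (proj2 (Nat.leb_le (k i) N)) by lia.
      rewrite !Bool.andb_true_r. reflexivity. }
    assert (H2 : 0 <= lsum (f N) (seq (0 + N0) (S N - N0))).
    { apply lsum_nonneg. intros i _. unfold f. destruct (_ && _ && _)%bool; nra. }
    lra. }
  change (is_lim_seq (sum_n (fun n => y n ^ 2)) 1). apply is_lim_seq_spec. intros eps. destruct (Hlow eps (cond_pos eps)) as [N1 HN1].
  exists N1. intros N HN. specialize (HN1 N HN). specialize (Hup N).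
  apply Rabs_lt_between. lra.
Qed.

Lemma term_le_sum (f : nat -> R) i lo hi : (forall n, 0 <= f n) -> (lo <= i <= hi)%nat -> f i <= sum_n_m f lo hi.
Proof.
  intros H Hi. apply Rle_trans with (sum_n_m (fun j => if Nat.eqb j i then f i else 0) lo hi).
  - rewrite (sum_single _ i lo hi).
    + rewrite Nat.eqb_refl. lra.
    + intros j Hj. destruct (Nat.eqb_spec j i); [contradiction|auto].
    + auto.
  - apply sum_n_m_le. intros j. destruct (Nat.eqb_spec j i); subst; [lra|auto].
Qed.

Lemma l2_extreme (y : nat -> R) : is_series (fun n => y n ^ 2) 1 ->
  forall (u v : nat -> R) t, (forall N, sum_n (fun n => u n ^ 2) N <= 1) -> (forall N, sum_n (fun n => v n ^ 2) N <= 1) ->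
  0 < t < 1 -> (forall n, y n = t * u n + (1 - t) * v n) -> u = v.
Proof.
  intros Hs u v t Hu Hv Ht Hy. apply functional_extensionality. intros n0. apply NNPP. intros Hne.
  set (d := (u n0 - v n0) ^ 2).
  assert (Hd : 0 < d) by (unfold d; apply pow2_gt_0; intros H; apply Hne; lra).
  assert (Hkey : forall N, (n0 <= N)%nat -> t * (1 - t) * d <= 1 - sum_n (fun n => y n ^ 2) N).
  { intros N HN.
    assert (Hid : sum_n_m (fun n => t * (1 - t) * (u n - v n) ^ 2) 0 N =
                  t * sum_n (fun n => u n ^ 2) N + ((1 - t) * sum_n (fun n => v n ^ 2) N + - sum_n (fun n => y n ^ 2) N)).
    { unfold sum_n.
      rewrite (sum_extR _ (fun n => t * (u n ^ 2) + ((1 - t) * (v n ^ 2) + - (y n ^ 2)))).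
      - rewrite !sum_plusR, sum_oppR, !sum_multR. reflexivity.
      - intros n. rewrite Hy. ring. }
    assert (Hle : t * (1 - t) * d <= sum_n_m (fun n => t * (1 - t) * (u n - v n) ^ 2) 0 N).
    { apply (term_le_sum (fun n => t * (1 - t) * (u n - v n) ^ 2) n0 0 N); [|lia].
      intros n. assert (0 < t * (1 - t)) by nra. apply Rmult_le_pos; [lra|apply pow2_ge_0]. }
    specialize (Hu N). specialize (Hv N). nra. }
  assert (Hl : is_lim_seq (sum_n (fun n => y n ^ 2)) 1) by exact Hs.
  apply is_lim_seq_spec in Hl. assert (Hp : 0 < t * (1 - t) * d) by (assert (0 < t * (1 - t)) by nra; nra).
  destruct (Hl (mkposreal _ Hp)) as [N HN]. specialize (HN (Nat.max N n0) ltac:(lia)).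
  specialize (Hkey (Nat.max N n0) ltac:(lia)). change (pos (mkposreal _ Hp)) with (t * (1 - t) * d) in HN. apply Rabs_lt_between in HN. lra.
Qed.

Lemma part2 (x : nat -> R) (hx : Jnorm x = Finite 1) :
  forall (F : option nat) (fam : nat -> interval),
     norming_family x F fam ->
     forall k : nat -> nat,
       (forall i j, inF F i -> inF F j -> (i < j)%nat -> (k i < k j)%nat) ->
       forall y : nat -> R,
         is_sum_basis F (fun i => isum x (fam i)) k y ->
         extreme_BJ y.
Proof.
  intros F fam [Hf Hn] k Hk y Hy.
  assert (HB : FB x 1).
  { replace 1 with (1 ^ 2) by ring. apply FB_of_Jnorm; [lra|]. rewrite hx. simpl. lra. }
  assert (HG : GB x).
  { intros l Hv Hd. replace 1 with (1 ^ 2) by ring. apply gen_bound_of_Jnorm; auto; [lra|]. rewrite hx; simpl; lra. }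
  assert (Hs : Fsumsq F (fun i => isum x (fam i)) = 1).
  { rewrite hx in Hn. inversion Hn as [Hn'].
    destruct (Rle_dec (Fsumsq F (fun i => isum x (fam i))) 0) as [Hle|Hlt].
    - rewrite sqrt_neg_0 in Hn' by auto. lra.
    - apply Rnot_le_lt in Hlt. rewrite <- (sqrt_sqrt _ (Rlt_le _ _ Hlt)). rewrite <- Hn'. ring. }
  assert (Hex := FB_ex_series x 1 HB).
  assert (Hgap := gap_zero x F fam HG Hf Hs).
  assert (HNc := NVb x F fam HG Hf Hs Hgap Hex).
  assert (HNy := NV_y F k _ y Hk Hy HNc).
  assert (Hser : is_series (fun n => y n ^ 2) 1).
  { apply (y_series F k (fun i => isum x (fam i)) y Hk Hy).
    - exact (G1 x F fam HG Hf).
    - exact (G2 x F fam HG Hf Hs). }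
  assert (HJ : Jnorm y = Finite 1).
  { rewrite Jnorm_NV; auto.
    - rewrite (is_series_unique _ _ Hser), sqrt_1. reflexivity.
    - exists 1; auto. }
  split.
  - unfold in_BJ. rewrite HJ. simpl. lra.
  - intros u v t Hu Hv Ht Hyuv. apply (l2_extreme y Hser u v t); auto.
    + apply FB_sq_partial. replace 1 with (1 ^ 2) by ring. apply FB_of_Jnorm; [lra|]. exact Hu.
    + apply FB_sq_partial. replace 1 with (1 ^ 2) by ring. apply FB_of_Jnorm; [lra|]. exact Hv.
Qed.

Theorem corollary3p17 (x : nat -> R) (hx : Jnorm x = Finite 1) :
  (extreme_BJ x ->
     forall I : interval, valid_interval I ->
       Jnorm (restrict x I) = Finite (l2norm (restrict x I)))
  /\
  (forall (F : option nat) (fam : nat -> interval),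
     norming_family x F fam ->
     forall k : nat -> nat,
       (forall i j, inF F i -> inF F j -> (i < j)%nat -> (k i < k j)%nat) ->
       forall y : nat -> R,
         is_sum_basis F (fun i => isum x (fam i)) k y ->
         extreme_BJ y).
Proof.
  split.
  - apply part1; auto.
  - apply part2; auto.
Qed.
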